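(* Let $T_*>\tau_D$ and $\mu_0\in(0,1)$ be constants. There exist a continuous function $\xi_{\mu_0}:[0,T_*]\to(0,1]$ and a constant $\gamma_2>0$, depending only on $\mu_0,n,a_*,a^*,\tau_D,T_*$, with $\xi_{\mu_0}(0)=1$, $\xi_{\mu_0}$ strictly decreasing on $[0,\tau_D]$, strictly increasing on $[\tau_D,T_*]$ and $\xi_{\mu_0}(T_* )<1$, such that the following holds. For any trajectory of system (5) with $\|z\|_\infty<\infty$, any $t_0\ge 0$, any constant $d_0>0$, and any $i,m\in\mathcal V_F$ such that the arc $(i,m)$ belongs to $\mathcal E_{\sigma(t)}$ for all $t\in[t_0,t_0+\tau_D)$ and $$|x_i(t)|_{\mathcal L(y(t))}\le\mu_0|x(t_0)|_{\mathcal L(y(t_0))}+d_0\quad\text{for all }t\in[t_0,t_0+\tau_D),$$ we have $$|x_m(t)|_{\mathcal L(y(t))}\le\xi_{\mu_0}(t-t_0)\,|x(t_0)|_{\mathcal L(y(t_0))}+\gamma_2\|z\|_\infty+d_0\quad\text{for all }t\in[t_0,t_0+T_*].$$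
   Context: Standing setup. Fix integers $n\ge 2$, $k\ge 1$, $d\ge 1$. The follower set is $\mathcal V_F=\{1,\dots,n\}$ and the leader set is $\mathcal V_L=\{\hat 1,\dots,\hat k\}$ (disjoint from $\mathcal V_F$); $\mathcal V=\mathcal V_F\cup\mathcal V_L$. The interaction topology is a time-varying digraph $\mathcal G_{\sigma(t)}=(\mathcal V,\mathcal E_{\sigma(t)})$, where $\sigma:[0,\infty)\to\mathcal P$ is a piecewise constant switching signal taking values in a finite set $\mathcal P$ of digraphs on $\mathcal V$; no arc of any of these digraphs enters a leader. An arc $(j,i)$ means that $i$ receives information from $j$. Dwell-time assumption: any two consecutive switching instants of $\sigma$ are separated by at least $\tau_D>0$. For $i\in\mathcal V_F$, $N_i(\sigma(t))=\{j\in\mathcal V_F:(j,i)\in\mathcal E_{\sigma(t)}\}$ and $L_i(\sigma(t))=\{j\in\mathcal V_L:(j,i)\in\mathcal E_{\sigma(t)}\}$. System (5): $\dot y_i=u_i(y,t)$ for $i=1,\dots,k$, and $\dot x_i=\sum_{j\in N_i(\sigma(t))}a_{ij}(x,y,t)(x_j-x_i)+\sum_{j\in L_i(\sigma(t))}b_{ij}(x,y,t)(y_j-x_i)+w_i(t)$ for $i=1,\dots,n$, where $x_i,y_j\in\mathbb R^d$, $x=(x_1,\dots,x_n)$, $y=(y_1,\dots,y_k)$; each $u_i(y,t)$ is continuous in $y$ and piecewise continuous in $t$; each $w_i$ is continuous; the weights $a_{ij},b_{ij}$ are continuous and satisfy $a_*\le a_{ij}(x,y,t)\le a^*$, $b_{ij}(x,y,t)\ge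 b_*$ for all $x,y,t$, with constants $0<a_*\le a^*$, $b_*>0$. Along a trajectory, $z(t)=(u_1(y(t),t),\dots,u_k(y(t),t),w_1(t),\dots,w_n(t))\in\mathbb R^{(n+k)d}$ and $\|z\|_\infty=\sup_{t\ge0}|z(t)|$. Set notation: $|\cdot|$ is the Euclidean norm; for a closed convex $K\subset\mathbb R^d$, $|v|_K=\inf_{p\in K}|v-p|$; $\mathcal L(y(t))=\mathrm{co}\{y_1(t),\dots,y_k(t)\}$ (convex hull); $|x(t)|_{\mathcal L(y(t))}=\max_{i\in\mathcal V_F}|x_i(t)|_{\mathcal L(y(t))}$. *)

(* Defs.v *)
From Stdlib Require Import Reals Lra List ClassicalEpsilon.
Import ListNotations.
Open Scope R_scope.

Definition rsum (m : nat) (f : nat -> R) : R :=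
  fold_right Rplus 0 (map f (seq 0 m)).

(** Infimum of a set of reals (chosen by the whitelisted epsilon operator;
    it is the genuine infimum whenever one exists). *)
Definition is_inf (E : R -> Prop) (m : R) : Prop :=
  (forall r, E r -> m <= r) /\ (forall b, (forall r, E r -> b <= r) -> b <= m).
Definition Inf (E : R -> Prop) : R := epsilon (inhabits 0) (is_inf E).

(** Vectors of R^d are represented as [nat -> R] (components 0..d-1). *)
Definition vnorm (d : nat) (v : nat -> R) : R := sqrt (rsum d (fun c => v c ^ 2)).

Definition in_hull (d k : nat) (Y : nat -> nat -> R) (p : nat -> R) : Prop :=
  exists lam : nat -> R,
    (forall j, (j < k)%nat -> 0 <= lam j) /\ rsum k lam = 1 /\
    (forall c, (c < d)%nat -> p c = rsum k (fun j => lam j * Y j c)).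

Definition hull_dist (d k : nat) (v : nat -> R) (Y : nat -> nat -> R) : R :=
  Inf (fun r => exists p, in_hull d k Y p /\ r = vnorm d (fun c => v c - p c)).

Definition max_hull_dist (n d k : nat) (X Y : nat -> nat -> R) : R :=
  fold_right Rmax 0 (map (fun i => hull_dist d k (X i) Y) (seq 0 n)).

Inductive vtx : Type := Fol (i : nat) | Lead (j : nat).

(** A digraph on the vertices: [g u v = true] means arc (u,v), i.e. v receives
    information from u. *)
Definition digraph := vtx -> vtx -> bool.

(** The switching instants are contained in {s m}. *)
Definition dwell_signal (tauD : R) (sg : R -> digraph) : Prop :=
  (forall t u j, sg t u (Lead j) = false) /\
  exists s : nat -> R, s 0%nat <= 0 /\
    (forall m, s (S m) - s m >= tauD) /\
    (forall m t t', s m <= t < s (S m) -> s m <= t' < s (S m) -> sg t = sg t').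

Definition loc_finite (D : R -> Prop) : Prop :=
  forall T, exists l : list R, forall t, D t -> 0 <= t <= T -> In t l.

Definition cont_at_nonneg (f : R -> R) (t : R) : Prop :=
  forall eps, eps > 0 -> exists del, del > 0 /\
    forall t', 0 <= t' -> Rabs (t' - t) < del -> Rabs (f t' - f t) < eps.
Definition cont_nonneg (f : R -> R) : Prop :=
  forall t, 0 <= t -> cont_at_nonneg f t.

Definition pw_cont_nonneg (f : R -> R) : Prop :=
  exists D, loc_finite D /\
    (forall t, 0 <= t -> ~ D t -> cont_at_nonneg f t) /\
    (forall t, D t -> 0 <= t ->
       (exists l, forall eps, eps > 0 -> exists del, del > 0 /\
          forall t', t < t' < t + del -> Rabs (f t' - l) < eps) /\
       (0 < t -> exists l, forall eps, eps > 0 -> exists del, del > 0 /\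
          forall t', 0 <= t' -> t - del < t' < t -> Rabs (f t' - l) < eps)).

Definition cont_xyt (n k d : nat)
  (f : (nat -> nat -> R) -> (nat -> nat -> R) -> R -> R) : Prop :=
  forall X Y t, 0 <= t -> forall eps, eps > 0 -> exists del, del > 0 /\
    forall X' Y' t', 0 <= t' -> Rabs (t' - t) < del ->
      (forall i c, (i < n)%nat -> (c < d)%nat -> Rabs (X' i c - X i c) < del) ->
      (forall j c, (j < k)%nat -> (c < d)%nat -> Rabs (Y' j c - Y j c) < del) ->
      Rabs (f X' Y' t' - f X Y t) < eps.

Definition cont_y (k d : nat) (f : (nat -> nat -> R) -> R) : Prop :=
  forall Y eps, eps > 0 -> exists del, del > 0 /\
    forall Y', (forall j c, (j < k)%nat -> (c < d)%nat -> Rabs (Y' j c - Y j c) < del) ->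
      Rabs (f Y' - f Y) < eps.

Definition system_data (n k d : nat) (a_lo a_hi b_lo : R)
  (a : nat -> nat -> (nat -> nat -> R) -> (nat -> nat -> R) -> R -> R)
  (b : nat -> nat -> (nat -> nat -> R) -> (nat -> nat -> R) -> R -> R)
  (u : nat -> (nat -> nat -> R) -> R -> nat -> R)
  (w : nat -> R -> nat -> R) : Prop :=
  (forall i j, (i < n)%nat -> (j < n)%nat ->
     cont_xyt n k d (a i j) /\
     forall X Y t, 0 <= t -> a_lo <= a i j X Y t <= a_hi) /\
  (forall i j, (i < n)%nat -> (j < k)%nat ->
     cont_xyt n k d (b i j) /\
     forall X Y t, 0 <= t -> b_lo <= b i j X Y t) /\
  (forall j c, (j < k)%nat -> (c < d)%nat ->
     (forall t, 0 <= t -> cont_y k d (fun Y => u j Y t c)) /\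
     (forall Y, pw_cont_nonneg (fun t => u j Y t c))) /\
  (forall i c, (i < n)%nat -> (c < d)%nat -> cont_nonneg (fun t => w i t c)).

Definition follower_rhs (n k : nat) (sg : R -> digraph)
  (a b : nat -> nat -> (nat -> nat -> R) -> (nat -> nat -> R) -> R -> R)
  (w : nat -> R -> nat -> R)
  (x y : R -> nat -> nat -> R) (i c : nat) (t : R) : R :=
  rsum n (fun j => if sg t (Fol j) (Fol i)
                   then a i j (x t) (y t) t * (x t j c - x t i c) else 0)
  + rsum k (fun j => if sg t (Lead j) (Fol i)
                     then b i j (x t) (y t) t * (y t j c - x t i c) else 0)
  + w i t c.

(** (x,y) is a trajectory of (5) on [0,oo): continuous, and satisfying the
    differential equations at every t > 0 outside a locally finite set
    (switching instants, discontinuities of u in t). *)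
Definition trajectory (n k d : nat) (sg : R -> digraph)
  (a b : nat -> nat -> (nat -> nat -> R) -> (nat -> nat -> R) -> R -> R)
  (u : nat -> (nat -> nat -> R) -> R -> nat -> R)
  (w : nat -> R -> nat -> R)
  (x y : R -> nat -> nat -> R) : Prop :=
  (forall i c, (i < n)%nat -> (c < d)%nat -> cont_nonneg (fun t => x t i c)) /\
  (forall j c, (j < k)%nat -> (c < d)%nat -> cont_nonneg (fun t => y t j c)) /\
  exists D, loc_finite D /\
    forall t, 0 < t -> ~ D t ->
      (forall j c, (j < k)%nat -> (c < d)%nat ->
         derivable_pt_lim (fun s => y s j c) t (u j (y t) t c)) /\
      (forall i c, (i < n)%nat -> (c < d)%nat ->
         derivable_pt_lim (fun s => x s i c) t (follower_rhs n k sg a b w x y i c t)).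

Definition z_norm (n k d : nat) (u : nat -> (nat -> nat -> R) -> R -> nat -> R)
  (w : nat -> R -> nat -> R) (y : R -> nat -> nat -> R) (t : R) : R :=
  sqrt (rsum k (fun j => rsum d (fun c => u j (y t) t c ^ 2))
        + rsum n (fun i => rsum d (fun c => w i t c ^ 2))).

Definition cont_on (lo hi : R) (f : R -> R) : Prop :=
  forall t, lo <= t <= hi -> forall eps, eps > 0 -> exists del, del > 0 /\
    forall t', lo <= t' <= hi -> Rabs (t' - t) < del -> Rabs (f t' - f t) < eps.

(* Main.v *)
Require Import Defs.
From Stdlib Require Import Reals.
From Stdlib Require Import Lra Lia List ClassicalEpsilon Classical.
Import ListNotations.
Open Scope R_scope.


Lemma fold_plus_acc (a : R) (l : list R) :
  fold_right Rplus a l = a + fold_right Rplus 0 l.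
Proof. induction l as [|x l IH]; simpl; [lra|rewrite IH; lra]. Qed.

Lemma rsum_0 f : rsum 0 f = 0.
Proof. reflexivity. Qed.

Lemma rsum_S N f : rsum (S N) f = rsum N f + f N.
Proof.
  unfold rsum. rewrite seq_S, map_app, fold_right_app. simpl.
  rewrite fold_plus_acc. lra.
Qed.

Lemma rsum_ext N f g : (forall q, (q < N)%nat -> f q = g q) -> rsum N f = rsum N g.
Proof.
  induction N; intros H; [reflexivity|]. rewrite !rsum_S, IHN, H; [reflexivity|lia|].
  intros; apply H; lia.
Qed.

Lemma rsum_plus N f g : rsum N (fun q => f q + g q) = rsum N f + rsum N g.
Proof. induction N; [unfold rsum; simpl; lra|]. rewrite !rsum_S, IHN; cbv beta; lra. Qed.

Lemma rsum_scal N c f : rsum N (fun q => c * f q) = c * rsum N f.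
Proof. induction N; [unfold rsum; simpl; lra|]. rewrite !rsum_S, IHN; cbv beta; lra. Qed.

Lemma rsum_le N f g : (forall q, (q < N)%nat -> f q <= g q) -> rsum N f <= rsum N g.
Proof.
  induction N; intros H; [unfold rsum; simpl; lra|]. rewrite !rsum_S.
  assert (f N <= g N) by (apply H; lia).
  assert (rsum N f <= rsum N g) by (apply IHN; intros; apply H; lia). lra.
Qed.

Lemma rsum_nonneg N f : (forall q, (q < N)%nat -> 0 <= f q) -> 0 <= rsum N f.
Proof.
  intros H. replace 0 with (rsum N (fun _ => 0)).
  - apply rsum_le; auto.
  - induction N; [reflexivity|]. rewrite rsum_S, IHN; [lra|]. intros; apply H; lia.
Qed.

Lemma rsum_const N c : rsum N (fun _ => c) = INR N * c.
Proof. induction N; [unfold rsum; simpl; lra|]. rewrite rsum_S, IHN, S_INR; lra. Qed.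

Lemma rsum_exchange N M (F : nat -> nat -> R) :
  rsum N (fun q => rsum M (fun j => F q j)) = rsum M (fun j => rsum N (fun q => F q j)).
Proof.
  induction N.
  - rewrite rsum_0. replace (rsum M (fun j => rsum 0 (fun q => F q j))) with (rsum M (fun _ => 0)).
    + rewrite rsum_const. lra.
    + apply rsum_ext. intros; reflexivity.
  - rewrite rsum_S, IHN. rewrite <- rsum_plus. apply rsum_ext. intros. rewrite rsum_S. reflexivity.
Qed.

Lemma rsum_split N1 N2 f : rsum (N1 + N2) f = rsum N1 f + rsum N2 (fun j => f (N1 + j)%nat).
Proof.
  induction N2.
  - rewrite Nat.add_0_r, rsum_0. lra.
  - rewrite Nat.add_succ_r, !rsum_S, IHN2. lra.
Qed.

Lemma rsum_delta N j (g : nat -> R) : (j < N)%nat ->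
  rsum N (fun q => if Nat.eqb q j then g q else 0) = g j.
Proof.
  induction N; intros Hj; [lia|]. rewrite rsum_S.
  destruct (Nat.eq_dec j N) as [->|Hne].
  - rewrite Nat.eqb_refl. replace (rsum N _) with (rsum N (fun _ => 0)).
    + rewrite rsum_const; lra.
    + apply rsum_ext. intros q Hq. destruct (Nat.eqb_spec q N); [lia|reflexivity].
  - rewrite IHN by lia. destruct (Nat.eqb_spec N j); [lia|lra].
Qed.

Lemma rsum_term_le N f j : (forall q, (q < N)%nat -> 0 <= f q) -> (j < N)%nat -> f j <= rsum N f.
Proof.
  induction N; intros H Hj; [lia|]. rewrite rsum_S.
  destruct (Nat.eq_dec j N) as [->|Hne].
  - assert (0 <= rsum N f) by (apply rsum_nonneg; intros; apply H; lia). lra.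
  - assert (f j <= rsum N f) by (apply IHN; [intros; apply H; lia|lia]).
    assert (0 <= f N) by (apply H; lia). lra.
Qed.

Lemma rsum_abs N f : Rabs (rsum N f) <= rsum N (fun q => Rabs (f q)).
Proof.
  induction N; [unfold rsum; simpl; rewrite Rabs_R0; lra|]. rewrite !rsum_S.
  eapply Rle_trans; [apply Rabs_triang|]. lra.
Qed.

Lemma rsum_one_plus N g i beta : (i < N)%nat -> 0 <= beta ->
  (forall q, (q < N)%nat -> g q <= beta) -> rsum N g <= g i + INR N * beta.
Proof.
  induction N; intros Hi Hb H; [lia|]. rewrite rsum_S, S_INR.
  destruct (Nat.eq_dec i N) as [->|Hne].
  - assert (rsum N g <= rsum N (fun _ => beta)) by (apply rsum_le; intros; apply H; lia).
    rewrite rsum_const in H0. lra.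
  - assert (rsum N g <= g i + INR N * beta) by (apply IHN; [lia|auto|intros; apply H; lia]).
    assert (g N <= beta) by (apply H; lia). lra.
Qed.

Lemma cs_step s p q x y : 0 <= p -> 0 <= q -> s * s <= p * q ->
  (s + x * y) * (s + x * y) <= (p + x * x) * (q + y * y).
Proof.
  intros Hp Hq H.
  set (T := p * (y*y) + q * (x*x)).
  assert (HT : 0 <= T) by (unfold T; nra).
  assert (H2 : T * T >= (2*s*x*y) * (2*s*x*y)).
  { assert (T*T - 4*p*q*(x*x)*(y*y) = (p*(y*y) - q*(x*x))*(p*(y*y) - q*(x*x))) by (unfold T; ring).
    assert (4*(s*s)*(x*x)*(y*y) <= 4*(p*q)*(x*x)*(y*y)).
    { apply Rmult_le_compat_r; [nra|]. apply Rmult_le_compat_r; [nra|]. lra. }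
    assert (0 <= (p*(y*y) - q*(x*x))*(p*(y*y) - q*(x*x))) by apply Rle_0_sqr.
    replace ((2*s*x*y) * (2*s*x*y)) with (4*(s*s)*(x*x)*(y*y)) by ring. lra. }
  assert (2*s*x*y <= T) by nra.
  unfold T in *. nra.
Qed.

Lemma cauchy_schwarz d (a b : nat -> R) :
  rsum d (fun c => a c * b c) * rsum d (fun c => a c * b c)
  <= rsum d (fun c => a c * a c) * rsum d (fun c => b c * b c).
Proof.
  induction d; [rewrite !rsum_0; lra|]. rewrite !rsum_S.
  apply cs_step; auto; apply rsum_nonneg; intros; nra.
Qed.

Lemma vnorm_ext d v v' : (forall c, (c < d)%nat -> v c = v' c) -> vnorm d v = vnorm d v'.
Proof. intros H. unfold vnorm. f_equal. apply rsum_ext. intros; rewrite H; auto. Qed.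

Lemma vnorm_nonneg d v : 0 <= vnorm d v.
Proof. apply sqrt_pos. Qed.

Lemma vnorm_sq d v : vnorm d v * vnorm d v = rsum d (fun c => v c * v c).
Proof.
  unfold vnorm. rewrite sqrt_sqrt.
  - apply rsum_ext; intros; ring.
  - apply rsum_nonneg; intros; nra.
Qed.

Lemma vnorm_zero d v : (forall c, (c < d)%nat -> v c = 0) -> vnorm d v = 0.
Proof.
  intros H. unfold vnorm. rewrite (rsum_ext _ _ (fun _ => 0)).
  - rewrite rsum_const, Rmult_0_r. apply sqrt_0.
  - intros; rewrite H; auto; ring.
Qed.

Lemma le_of_sq a b : 0 <= b -> a * a <= b * b -> a <= b.
Proof. intros. nra. Qed.

Lemma vnorm_scal d al v : vnorm d (fun c => al * v c) = Rabs al * vnorm d v.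
Proof.
  apply Rle_antisym; apply le_of_sq.
  - apply Rmult_le_pos; [apply Rabs_pos|apply vnorm_nonneg].
  - rewrite vnorm_sq. replace (Rabs al * vnorm d v * (Rabs al * vnorm d v)) with
      ((Rabs al * Rabs al) * (vnorm d v * vnorm d v)) by ring.
    rewrite vnorm_sq, <- Rabs_mult, Rabs_right by nra. rewrite <- rsum_scal.
    apply Req_le, rsum_ext; intros; ring.
  - apply vnorm_nonneg.
  - rewrite vnorm_sq. replace (Rabs al * vnorm d v * (Rabs al * vnorm d v)) with
      ((Rabs al * Rabs al) * (vnorm d v * vnorm d v)) by ring.
    rewrite vnorm_sq, <- Rabs_mult, Rabs_right by nra. rewrite <- rsum_scal.
    apply Req_le, rsum_ext; intros; ring.
Qed.

Lemma vnorm_triang d v v' : vnorm d (fun c => v c + v' c) <= vnorm d v + vnorm d v'.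
Proof.
  apply le_of_sq.
  - pose proof (vnorm_nonneg d v); pose proof (vnorm_nonneg d v'); lra.
  - rewrite vnorm_sq.
    replace ((vnorm d v + vnorm d v') * (vnorm d v + vnorm d v')) with
      (vnorm d v * vnorm d v + 2 * (vnorm d v * vnorm d v') + vnorm d v' * vnorm d v') by ring.
    rewrite !vnorm_sq.
    replace (rsum d (fun c => (v c + v' c) * (v c + v' c))) with
      (rsum d (fun c => v c * v c) + 2 * rsum d (fun c => v c * v' c) + rsum d (fun c => v' c * v' c)).
    2:{ rewrite <- rsum_scal, <- !rsum_plus. apply rsum_ext; intros; ring. }
    assert (rsum d (fun c => v c * v' c) <= vnorm d v * vnorm d v').
    { apply le_of_sq.
      - apply Rmult_le_pos; apply vnorm_nonneg.
      - replace (vnorm d v * vnorm d v' * (vnorm d v * vnorm d v')) with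
          ((vnorm d v * vnorm d v) * (vnorm d v' * vnorm d v')) by ring.
        rewrite !vnorm_sq. apply cauchy_schwarz. }
    lra.
Qed.

Lemma vnorm_sym d v v' : vnorm d (fun c => v c - v' c) = vnorm d (fun c => v' c - v c).
Proof.
  rewrite <- (Rmult_1_l (vnorm d (fun c => v c - v' c))).
  replace 1 with (Rabs (-1)) by (rewrite Rabs_left; lra).
  rewrite <- vnorm_scal. apply vnorm_ext; intros; ring.
Qed.

Lemma vnorm_le_abs d v : vnorm d v <= rsum d (fun c => Rabs (v c)).
Proof.
  induction d.
  - unfold vnorm. rewrite !rsum_0, sqrt_0. lra.
  - apply le_of_sq.
    + apply rsum_nonneg; intros; apply Rabs_pos.
    + rewrite vnorm_sq, !rsum_S.
      assert (Hr : rsum d (fun c => v c * v c) <= rsum d (fun c => Rabs (v c)) * rsum d (fun c => Rabs (v c))).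
      { rewrite <- vnorm_sq. assert (0 <= vnorm d v) by apply vnorm_nonneg. nra. }
      assert (0 <= rsum d (fun c => Rabs (v c))) by (apply rsum_nonneg; intros; apply Rabs_pos).
      assert (Rabs (v d) * Rabs (v d) = v d * v d) by (rewrite <- Rabs_mult; apply Rabs_right; nra).
      assert (0 <= Rabs (v d)) by apply Rabs_pos. nra.
Qed.

Lemma vnorm_sum d N (al : nat -> R) (V : nat -> nat -> R) :
  vnorm d (fun c => rsum N (fun q => al q * V q c)) <= rsum N (fun q => Rabs (al q) * vnorm d (V q)).
Proof.
  induction N.
  - rewrite rsum_0. rewrite vnorm_zero; [lra|]. intros; apply rsum_0.
  - rewrite rsum_S. eapply Rle_trans.
    + rewrite (vnorm_ext d _ (fun c => rsum N (fun q => al q * V q c) + al N * V N c))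
        by (intros; apply rsum_S).
      apply vnorm_triang.
    + rewrite vnorm_scal. lra.
Qed.

Lemma rsum_scal_r N f c : rsum N (fun q => f q * c) = rsum N f * c.
Proof. rewrite Rmult_comm, <- rsum_scal. apply rsum_ext; intros; ring. Qed.

Lemma hull_vertex d k Y j : (j < k)%nat -> in_hull d k Y (Y j).
Proof.
  intros Hj. exists (fun q => if Nat.eqb q j then 1 else 0). split; [|split].
  - intros q _. destruct (Nat.eqb q j); lra.
  - apply (rsum_delta k j (fun _ => 1)); auto.
  - intros c _. symmetry.
    rewrite (rsum_ext _ _ (fun q => if Nat.eqb q j then Y q c else 0)).
    + apply (rsum_delta k j (fun q => Y q c)); auto.
    + intros q _. destruct (Nat.eqb q j); ring.
Qed.

Lemma hull_comb d k Y N (al : nat -> R) (P : nat -> nat -> R) :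
  (forall q, (q < N)%nat -> 0 <= al q) -> rsum N al = 1 ->
  (forall q, (q < N)%nat -> in_hull d k Y (P q)) ->
  in_hull d k Y (fun c => rsum N (fun q => al q * P q c)).
Proof.
  intros Hal Hs HP.
  assert (Hc : forall q, exists lam, (q < N)%nat ->
    (forall j, (j < k)%nat -> 0 <= lam j) /\ rsum k lam = 1 /\
    (forall c, (c < d)%nat -> P q c = rsum k (fun j => lam j * Y j c))).
  { intros q. destruct (Compare_dec.le_lt_dec N q).
    - exists (fun _ => 0). intros; lia.
    - destruct (HP q l) as [lam H]. exists lam; auto. }
  destruct (choice _ Hc) as [f Hf].
  exists (fun j => rsum N (fun q => al q * f q j)). split; [|split].
  - intros j Hj. apply rsum_nonneg. intros q Hq. destruct (Hf q Hq) as [H1 _].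
    apply Rmult_le_pos; auto.
  - rewrite <- rsum_exchange. rewrite <- Hs. apply rsum_ext. intros q Hq.
    rewrite rsum_scal. destruct (Hf q Hq) as [_ [H2 _]]. rewrite H2; ring.
  - intros c Hc'. 
    rewrite (rsum_ext k _ (fun j => rsum N (fun q => al q * f q j * Y j c)))
      by (intros; rewrite <- rsum_scal_r; reflexivity).
    rewrite <- rsum_exchange. apply rsum_ext. intros q Hq.
    destruct (Hf q Hq) as [_ [_ H3]]. rewrite H3 by auto. rewrite <- rsum_scal.
    apply rsum_ext; intros; ring.
Qed.

Definition HE d k v Y := fun r => exists p, in_hull d k Y p /\ r = vnorm d (fun c => v c - p c).

Lemma inf_exists d k v Y : (1 <= k)%nat -> exists m, is_inf (HE d k v Y) m.
Proof.
  intros Hk.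
  set (E' := fun r => HE d k v Y (- r)).
  assert (Hb : bound E').
  { exists 0. intros r [p [_ Hr]]. assert (0 <= - r) by (rewrite Hr; apply vnorm_nonneg). lra. }
  assert (Hn : exists r, E' r).
  { exists (- vnorm d (fun c => v c - Y 0%nat c)). exists (Y 0%nat). split.
    - apply hull_vertex; lia.
    - ring. }
  destruct (completeness E' Hb Hn) as [m [Hm1 Hm2]].
  exists (- m). split.
  - intros r Hr. assert (E' (- r)) by (unfold E'; rewrite Ropp_involutive; auto).
    specialize (Hm1 _ H). lra.
  - intros b Hb'. assert (m <= - b).
    { apply Hm2. intros r Hr. specialize (Hb' _ Hr). lra. }
    lra.
Qed.

Lemma D_spec d k v Y : (1 <= k)%nat -> is_inf (HE d k v Y) (hull_dist d k v Y).
Proof.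
  intros Hk. unfold hull_dist, Inf. apply epsilon_spec. apply inf_exists; auto.
Qed.

Lemma D_le d k v Y p : (1 <= k)%nat -> in_hull d k Y p ->
  hull_dist d k v Y <= vnorm d (fun c => v c - p c).
Proof. intros Hk Hp. apply (proj1 (D_spec d k v Y Hk)). exists p; auto. Qed.

Lemma D_nonneg d k v Y : (1 <= k)%nat -> 0 <= hull_dist d k v Y.
Proof.
  intros Hk. apply (proj2 (D_spec d k v Y Hk)). intros r [p [_ ->]]. apply vnorm_nonneg.
Qed.

Lemma D_approx d k v Y eps : (1 <= k)%nat -> 0 < eps ->
  exists p, in_hull d k Y p /\ vnorm d (fun c => v c - p c) < hull_dist d k v Y + eps.
Proof.
  intros Hk He. apply NNPP. intros Hn.
  assert (hull_dist d k v Y + eps <= hull_dist d k v Y).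
  { apply (proj2 (D_spec d k v Y Hk)). intros r [p [Hp ->]].
    apply Rnot_lt_le. intros Hlt. apply Hn. exists p; auto. }
  lra.
Qed.

Lemma D_lip d k v v' Y : (1 <= k)%nat ->
  hull_dist d k v' Y <= hull_dist d k v Y + vnorm d (fun c => v' c - v c).
Proof.
  intros Hk. apply le_epsilon. intros eps He.
  destruct (D_approx d k v Y eps Hk He) as [p [Hp Hlt]].
  eapply Rle_trans; [apply (D_le _ _ _ _ p Hk Hp)|].
  eapply Rle_trans.
  - rewrite (vnorm_ext d _ (fun c => (v' c - v c) + (v c - p c))) by (intros; ring).
    apply vnorm_triang.
  - lra.
Qed.

Lemma D_vertex d k Y j : (1 <= k)%nat -> (j < k)%nat -> hull_dist d k (Y j) Y <= 0.
Proof.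
  intros Hk Hj. eapply Rle_trans; [apply (D_le _ _ _ _ (Y j) Hk (hull_vertex d k Y j Hj))|].
  rewrite vnorm_zero; [lra|]. intros; ring.
Qed.

Lemma D_comb d k Y N (al : nat -> R) (V : nat -> nat -> R) v' : (1 <= k)%nat ->
  (forall q, (q < N)%nat -> 0 <= al q) -> rsum N al = 1 ->
  (forall c, (c < d)%nat -> v' c = rsum N (fun q => al q * V q c)) ->
  hull_dist d k v' Y <= rsum N (fun q => al q * hull_dist d k (V q) Y).
Proof.
  intros Hk Hal Hs Hv. apply le_epsilon. intros eps He.
  assert (Hc : forall q, exists p, in_hull d k Y p /\
     vnorm d (fun c => V q c - p c) < hull_dist d k (V q) Y + eps)
    by (intros; apply D_approx; auto).
  destruct (choice _ Hc) as [f Hf].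
  assert (Hin : in_hull d k Y (fun c => rsum N (fun q => al q * f q c)))
    by (apply hull_comb; auto; intros; apply Hf).
  eapply Rle_trans; [apply (D_le _ _ _ _ _ Hk Hin)|].
  rewrite (vnorm_ext d _ (fun c => rsum N (fun q => al q * (V q c - f q c)))).
  2:{ intros c Hc'. rewrite Hv by auto. rewrite <- (Rplus_0_r (rsum N (fun q => al q * (V q c - f q c)))).
      rewrite <- (Rmult_0_l (rsum N (fun q => al q * f q c))).
      replace (rsum N (fun q => al q * (V q c - f q c))) with
        (rsum N (fun q => al q * V q c) + (-1) * rsum N (fun q => al q * f q c)).
      - ring.
      - rewrite <- rsum_scal, <- rsum_plus. apply rsum_ext; intros; ring. }
  eapply Rle_trans; [apply vnorm_sum|].
  replace (rsum N (fun q => al q * hull_dist d k (V q) Y) + eps) with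
    (rsum N (fun q => al q * (hull_dist d k (V q) Y + eps))).
  2:{ rewrite (rsum_ext _ _ (fun q => al q * hull_dist d k (V q) Y + eps * al q)) by (intros; ring).
      rewrite rsum_plus, rsum_scal, Hs. ring. }
  apply rsum_le. intros q Hq. rewrite Rabs_right by (apply Rle_ge; auto).
  apply Rmult_le_compat_l; auto. left; apply Hf.
Qed.

Lemma D_haus d k v Y Y' B : (1 <= k)%nat ->
  (forall j, (j < k)%nat -> vnorm d (fun c => Y' j c - Y j c) <= B) ->
  hull_dist d k v Y' <= hull_dist d k v Y + B.
Proof.
  intros Hk HB. apply le_epsilon. intros eps He.
  destruct (D_approx d k v Y eps Hk He) as [p [[lam [Hl1 [Hl2 Hl3]]] Hlt]].
  set (p' := fun c => rsum k (fun j => lam j * Y' j c)).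
  assert (Hin : in_hull d k Y' p') by (exists lam; auto).
  eapply Rle_trans; [apply (D_le _ _ _ _ _ Hk Hin)|].
  eapply Rle_trans.
  - rewrite (vnorm_ext d _ (fun c => (v c - p c) + rsum k (fun j => lam j * (Y j c - Y' j c)))).
    2:{ intros c Hc. unfold p'. rewrite Hl3 by auto.
        replace (rsum k (fun j => lam j * (Y j c - Y' j c))) with
          (rsum k (fun j => lam j * Y j c) + (-1) * rsum k (fun j => lam j * Y' j c)).
        - ring.
        - rewrite <- rsum_scal, <- rsum_plus. apply rsum_ext; intros; ring. }
    apply vnorm_triang.
  - assert (rsum k (fun j => Rabs (lam j) * vnorm d (fun c => Y j c - Y' j c)) <= B).
    { replace B with (rsum k (fun j => lam j * B)) by (rewrite rsum_scal_r, Hl2; ring).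
      apply rsum_le. intros j Hj. rewrite Rabs_right by (apply Rle_ge; auto).
      apply Rmult_le_compat_l; auto. rewrite vnorm_sym. auto. }
    pose proof (vnorm_sum d k lam (fun j c => Y j c - Y' j c)). simpl in H0. lra.
Qed.

Definition ccont (a b : R) (H : R -> R) : Prop :=
  forall t, a <= t <= b -> forall eps, 0 < eps -> exists del, 0 < del /\
    forall s, a <= s <= b -> Rabs (s - t) < del -> Rabs (H s - H t) < eps.

Definition fwd (H : R -> R) (t : R) : Prop :=
  exists del, 0 < del /\ forall s, t < s < t + del -> H s <= H t.

Lemma ccont_sub a b a' b' H : a <= a' -> b' <= b -> ccont a b H -> ccont a' b' H.
Proof.
  intros H1 H2 Hc t Ht eps He. destruct (Hc t ltac:(lra) eps He) as [del [Hd Hs]].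
  exists del; split; auto. intros s Hs' Hst. apply Hs; auto; lra.
Qed.

Lemma mono0 a b H : a < b -> ccont a b H -> (forall t, a < t < b -> fwd H t) -> H b <= H a.
Proof.
  intros Hab Hc Hf.
  assert (Step1 : forall a', a < a' < b -> H b <= H a').
  { intros a' Ha'.
    set (S := fun s => a' <= s <= b /\ forall r, a' <= r <= s -> H r <= H a').
    assert (Hb : bound S) by (exists b; intros s [Hs _]; lra).
    assert (Hn : exists s, S s).
    { exists a'. split; [lra|]. intros r Hr. replace r with a' by lra. lra. }
    destruct (completeness S Hb Hn) as [ts [Hub Hlub]].
    assert (Hts1 : a' <= ts) by (apply Hub; destruct Hn; unfold S; split; [lra|]; intros r Hr; replace r with a' by lra; lra).
    assert (Hts2 : ts <= b) by (apply Hlub; intros s [Hs _]; lra).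
    assert (C1 : forall r, a' <= r < ts -> H r <= H a').
    { intros r Hr. apply NNPP. intros Hneg.
      assert (ts <= r).
      { apply Hlub. intros s [Hs1 Hs2]. apply Rnot_lt_le. intros Hlt. apply Hneg. apply Hs2. lra. }
      lra. }
    assert (C2 : H ts <= H a').
    { destruct (Req_dec ts a') as [->|Hne]; [lra|].
      apply Rnot_lt_le. intros Hlt.
      destruct (Hc ts ltac:(lra) (H ts - H a') ltac:(lra)) as [del [Hd Hs]].
      set (r := Rmax a' (ts - del / 2)).
      assert (a' <= r < ts) by (unfold r; apply Rmax_case_strong; intros; lra).
      assert (Rabs (r - ts) < del) by (unfold r; apply Rmax_case_strong; intros; rewrite Rabs_left; lra).
      specialize (Hs r ltac:(lra) H1). specialize (C1 r H0).
      apply Rabs_def2 in Hs. lra. }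
    assert (C3 : ts = b).
    { destruct (Req_dec ts b) as [|Hne]; auto. exfalso.
      destruct (Hf ts ltac:(lra)) as [del [Hd Hs]].
      set (s := ts + Rmin del (b - ts) / 2).
      assert (Hm : 0 < Rmin del (b - ts)) by (apply Rmin_glb_lt; lra).
      assert (Hm2 : Rmin del (b - ts) <= del) by apply Rmin_l.
      assert (Hm3 : Rmin del (b - ts) <= b - ts) by apply Rmin_r.
      assert (S s).
      { unfold s. split; [lra|]. intros r Hr.
        destruct (Rlt_le_dec r ts); [apply C1; lra|].
        destruct (Req_dec r ts) as [->|]; auto.
        assert (H r <= H ts) by (apply Hs; lra). lra. }
      specialize (Hub s H0). unfold s in Hub. lra. }
    subst ts. auto. }
  apply Rnot_lt_le. intros Hlt.
  destruct (Hc a ltac:(lra) (H b - H a) ltac:(lra)) as [del [Hd Hs]].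
  set (a' := a + Rmin del (b - a) / 2).
  assert (Hm : 0 < Rmin del (b - a)) by (apply Rmin_glb_lt; lra).
  assert (Hm2 : Rmin del (b - a) <= del) by apply Rmin_l.
  assert (Hm3 : Rmin del (b - a) <= b - a) by apply Rmin_r.
  assert (Ha' : a < a' < b) by (unfold a'; lra).
  specialize (Step1 a' Ha').
  assert (Rabs (a' - a) < del) by (rewrite Rabs_right; unfold a' in *; lra).
  specialize (Hs a' ltac:(lra) H0). apply Rabs_def2 in Hs. lra.
Qed.

Lemma mono_aux N : forall E, (length E <= N)%nat -> forall a b H, a <= b -> ccont a b H ->
  (forall t, a < t < b -> ~ In t E -> fwd H t) -> H b <= H a.
Proof.
  induction N as [|N IH]; intros E HE a b H Hab Hc Hf;
  (destruct (classic (exists e, In e E /\ a < e < b)) as [[e [He1 He2]]|Hno];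
   [| destruct (Req_dec a b) as [->|Hne]; [lra|];
      apply mono0; [lra|auto|]; intros t Ht; apply Hf; auto; intros Hin; apply Hno; exists t; auto]).
  - pose proof (remove_length_lt Req_dec_T E e He1). lia.
  - pose proof (remove_length_lt Req_dec_T E e He1).
    set (E' := remove Req_dec_T e E).
    assert (HE' : (length E' <= N)%nat) by (unfold E'; lia).
    assert (Hf' : forall a0 b0, a <= a0 -> b0 <= b -> forall t, a0 < t < b0 -> t <> e -> ~ In t E' -> fwd H t).
    { intros a0 b0 Ha0 Hb0 t Ht Hte Hin. apply Hf; [lra|]. intros Hin2. apply Hin.
      apply in_in_remove; auto. }
    assert (H e <= H a).
    { apply (IH E' HE'); [lra| apply (ccont_sub a b); auto; lra|].
      intros t Ht Hin. apply (Hf' a e); auto; lra. }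
    assert (H b <= H e).
    { apply (IH E' HE'); [lra| apply (ccont_sub a b); auto; lra|].
      intros t Ht Hin. apply (Hf' e b); auto; lra. }
    lra.
Qed.

Lemma mono E a b H : a <= b -> ccont a b H ->
  (forall t, a < t < b -> ~ In t E -> fwd H t) -> H b <= H a.
Proof. intros. eapply mono_aux; eauto. Qed.

Definition fmax (L : list (R -> R)) (s : R) : R := fold_right Rmax 0 (map (fun f => f s) L).

Lemma fmax_ge L s f : In f L -> f s <= fmax L s.
Proof.
  unfold fmax. induction L as [|g L IH]; simpl; [tauto|]. intros [->|Hin].
  - apply Rmax_l.
  - eapply Rle_trans; [apply IH; auto|apply Rmax_r].
Qed.

Lemma fmax_nonneg L s : 0 <= fmax L s.
Proof. unfold fmax. induction L; simpl; [lra|]. eapply Rle_trans; [apply IHL|apply Rmax_r]. Qed.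

Lemma fmax_le L s c : 0 <= c -> (forall f, In f L -> f s <= c) -> fmax L s <= c.
Proof.
  unfold fmax. induction L as [|g L IH]; simpl; intros Hc H; [lra|]. apply Rmax_lub.
  - apply H; auto.
  - apply IH; auto.
Qed.

Lemma fmax_fwd L t : (forall f, In f L -> exists del, 0 < del /\ forall s, t < s < t + del -> f s <= fmax L t) ->
  fwd (fmax L) t.
Proof.
  intros H.
  assert (forall L', incl L' L -> exists del, 0 < del /\ forall s, t < s < t + del -> forall f, In f L' -> f s <= fmax L t).
  { induction L' as [|g L' IH]; intros Hi.
    - exists 1; split; [lra|]. intros s _ f [].
    - destruct IH as [d1 [Hd1 H1]]. { intros x Hx; apply Hi; right; auto. }
      destruct (H g (Hi g (or_introl eq_refl))) as [d2 [Hd2 H2]].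
      exists (Rmin d1 d2). split; [apply Rmin_glb_lt; auto|].
      intros s Hs f [<-|Hf].
      + apply H2. pose proof (Rmin_r d1 d2). lra.
      + apply H1; auto. pose proof (Rmin_l d1 d2). lra. }
  destruct (H0 L (incl_refl L)) as [del [Hd Hs]]. exists del; split; auto.
  intros s Hs'. apply fmax_le; [apply fmax_nonneg|]. intros f Hf. apply Hs; auto.
Qed.

Lemma Rmax_lip a b a' b' : Rabs (Rmax a b - Rmax a' b') <= Rmax (Rabs (a - a')) (Rabs (b - b')).
Proof.
  set (M := Rmax (Rabs (a - a')) (Rabs (b - b'))).
  assert (H1 : Rabs (a - a') <= M) by apply Rmax_l.
  assert (H2 : Rabs (b - b') <= M) by apply Rmax_r.
  pose proof (Rle_abs (a - a')). pose proof (Rle_abs (b - b')).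
  pose proof (Rle_abs (- (a - a'))). pose proof (Rle_abs (- (b - b'))).
  rewrite Rabs_Ropp in H3, H4.
  apply Rabs_le. split.
  - assert (Rmax a' b' <= Rmax a b + M).
    { apply Rmax_lub; [eapply Rle_trans; [|apply Rplus_le_compat_r, Rmax_l]|eapply Rle_trans; [|apply Rplus_le_compat_r, Rmax_r]]; lra. }
    lra.
  - assert (Rmax a b <= Rmax a' b' + M).
    { apply Rmax_lub; [eapply Rle_trans; [|apply Rplus_le_compat_r, Rmax_l]|eapply Rle_trans; [|apply Rplus_le_compat_r, Rmax_r]]; lra. }
    lra.
Qed.

Lemma fmax_cont a b L : (forall f, In f L -> ccont a b f) -> ccont a b (fmax L).
Proof.
  induction L as [|g L IH]; intros H t Ht eps He.
  - exists 1; split; [lra|]. intros. unfold fmax; simpl. rewrite Rminus_0_r, Rabs_R0; lra.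
  - destruct (H g (or_introl eq_refl) t Ht eps He) as [d1 [Hd1 H1]].
    destruct (IH (fun f Hf => H f (or_intror Hf)) t Ht eps He) as [d2 [Hd2 H2]].
    exists (Rmin d1 d2). split; [apply Rmin_glb_lt; auto|].
    intros s Hs Hst. unfold fmax; simpl. eapply Rle_lt_trans; [apply Rmax_lip|].
    apply Rmax_lub_lt.
    + apply H1; auto. pose proof (Rmin_l d1 d2). lra.
    + apply H2; auto. pose proof (Rmin_r d1 d2). lra.
Qed.

Definition xi2 (c2 K tau s : R) : R := 1 - c2 * exp (- (K * (s - tau))).
Definition xif (c K tau s : R) : R :=
  (1 - c * Rmin s tau) + xi2 (c * tau) K tau (Rmax s tau) - (1 - c * tau).

Lemma exp_le1 x : x <= 0 -> exp x <= 1.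
Proof. intros H. rewrite <- exp_0. destruct (Req_dec x 0) as [->|]; [lra|]. left; apply exp_increasing; lra. Qed.

Lemma xi2_split c2 K tau u h : xi2 c2 K tau (u + h) = 1 - (c2 * exp (- (K * (u - tau)))) * exp (- (K * h)).
Proof.
  unfold xi2. rewrite Rmult_assoc, <- exp_plus. do 3 f_equal. ring.
Qed.

Lemma xi2_upper c2 K tau u v : 0 <= c2 -> 0 < K -> tau <= u -> u <= v ->
  xi2 c2 K tau v - xi2 c2 K tau u <= c2 * K * (v - u).
Proof.
  intros Hc HK Hu Huv. replace v with (u + (v - u)) by ring. rewrite xi2_split.
  unfold xi2. set (q := exp (- (K * (u - tau)))).
  assert (0 < q <= 1) by (split; [apply exp_pos|apply exp_le1; nra]).
  pose proof (exp_ineq1_le (- (K * (u + (v - u) - u)))).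
  replace (u + (v - u) - u) with (v - u) in * by ring.
  assert (1 - exp (- (K * (v - u))) <= K * (v - u)) by lra.
  assert (0 <= 1 - exp (- (K * (v - u)))).
  { assert (exp (- (K * (v - u))) <= 1) by (apply exp_le1; nra). lra. }
  replace (1 - c2 * q * exp (- (K * (v - u))) - (1 - c2 * q)) with (c2 * q * (1 - exp (- (K * (v - u))))) by ring.
  assert (c2 * q <= c2) by nra.
  nra.
Qed.

Lemma xi2_lower c2 K tau u h eta : 0 <= c2 <= 1 -> 0 < K -> tau <= u -> 0 < h -> 0 < eta -> h <= eta / (K * K) ->
  xi2 c2 K tau (u + h) - xi2 c2 K tau u >= h * (K * (1 - xi2 c2 K tau u) - eta).
Proof.
  intros Hc HK Hu Hh He Hhe. rewrite xi2_split. unfold xi2.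
  set (q := c2 * exp (- (K * (u - tau)))).
  assert (Hq : 0 <= q <= 1).
  { assert (0 < exp (- (K * (u - tau))) <= 1) by (split; [apply exp_pos|apply exp_le1; nra]).
    unfold q; split; nra. }
  set (e := exp (- (K * h))).
  assert (He1 : e * (1 + K * h) <= 1).
  { unfold e. pose proof (exp_ineq1_le (K * h)).
    assert (exp (- (K * h)) * exp (K * h) = 1) by (rewrite <- exp_plus; replace (- (K * h) + K * h) with 0 by ring; apply exp_0).
    assert (0 < exp (- (K * h))) by apply exp_pos. nra. }
  assert (He0 : 0 < e) by apply exp_pos.
  assert (Hkh : K * K * h <= eta).
  { assert (0 < K * K) by nra. replace eta with (K * K * (eta / (K * K))) by (field; intro; lra).
    apply Rmult_le_compat_l; lra. }
  replace (1 - q * e - (1 - q)) with (q * (1 - e)) by ring.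
  replace (1 - (1 - q)) with q by ring.
  (* q(1-e)(1+Kh) >= q K h ;  want q(1-e) >= h(Kq - eta) *)
  assert (A1 : q * (1 - e) * (1 + K * h) >= q * K * h) by nra.
  assert (A2 : h * (K * q - eta) * (1 + K * h) <= q * K * h).
  { assert (K * K * h * q <= K * K * h) by (assert (0 <= K*K*h) by nra; nra).
    assert (h * (K * K * h * q) <= h * eta) by (apply Rmult_le_compat_l; lra).
    assert (h * K * q * K * h <= h * eta) by (replace (h * K * q * K * h) with (h * (K * K * h * q)) by ring; lra).
    assert (h * eta * (K * h) >= 0) by (apply Rle_ge; repeat apply Rmult_le_pos; lra).
    replace (h * (K * q - eta) * (1 + K * h)) with (q * K * h + h * K * q * K * h - h * eta - h * eta * (K * h)) by ring.
    lra. }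
  assert (0 < 1 + K * h) by nra.
  apply Rle_ge. apply (Rmult_le_reg_r (1 + K * h)); auto. lra.
Qed.

Lemma xif_left c K tau s : s <= tau -> xif c K tau s = 1 - c * s.
Proof.
  intros H. unfold xif. rewrite Rmin_left, Rmax_right by lra. unfold xi2.
  replace (tau - tau) with 0 by ring. rewrite Rmult_0_r, Ropp_0, exp_0. ring.
Qed.

Lemma xif_right c K tau s : tau <= s -> xif c K tau s = xi2 (c * tau) K tau s.
Proof. intros H. unfold xif. rewrite Rmin_right, Rmax_left by lra. ring. Qed.

Lemma xi2_strict c2 K tau u v : 0 < c2 -> 0 < K -> tau <= u -> u < v -> xi2 c2 K tau u < xi2 c2 K tau v.
Proof.
  intros Hc HK Hu Huv. unfold xi2.
  assert (exp (- (K * (v - tau))) < exp (- (K * (u - tau)))) by (apply exp_increasing; nra).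
  nra.
Qed.

Lemma xi2_range c2 K tau u : 0 < c2 -> 0 < K -> tau <= u -> 1 - c2 <= xi2 c2 K tau u < 1.
Proof.
  intros Hc HK Hu. unfold xi2.
  assert (0 < exp (- (K * (u - tau))) <= 1) by (split; [apply exp_pos|apply exp_le1; nra]).
  nra.
Qed.

Lemma xi2_lip c2 K tau u v : 0 < c2 -> 0 < K -> tau <= u -> tau <= v ->
  Rabs (xi2 c2 K tau v - xi2 c2 K tau u) <= c2 * K * Rabs (v - u).
Proof.
  intros Hc HK Hu Hv. destruct (Rle_dec u v).
  - assert (xi2 c2 K tau u <= xi2 c2 K tau v).
    { destruct (Req_dec u v) as [->|]; [lra|]. left; apply xi2_strict; auto; lra. }
    rewrite (Rabs_right (v - u)) by lra. rewrite Rabs_right by lra. apply xi2_upper; lra.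
  - assert (xi2 c2 K tau v < xi2 c2 K tau u) by (apply xi2_strict; auto; lra).
    rewrite (Rabs_left (v - u)) by lra. rewrite Rabs_left by lra.
    pose proof (xi2_upper c2 K tau v u ltac:(lra) HK Hv ltac:(lra)). lra.
Qed.

Lemma Rmin_lip a b t : Rabs (Rmin a t - Rmin b t) <= Rabs (a - b).
Proof.
  apply Rabs_le. pose proof (Rle_abs (a - b)). pose proof (Rle_abs (- (a - b))). rewrite Rabs_Ropp in H0.
  unfold Rmin; destruct (Rle_dec a t); destruct (Rle_dec b t); lra.
Qed.

Lemma Rmax_lip1 a b t : Rabs (Rmax a t - Rmax b t) <= Rabs (a - b).
Proof.
  apply Rabs_le. pose proof (Rle_abs (a - b)). pose proof (Rle_abs (- (a - b))). rewrite Rabs_Ropp in H0.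
  unfold Rmax; destruct (Rle_dec a t); destruct (Rle_dec b t); lra.
Qed.

Lemma xif_props c K tau T : 0 < c -> 0 < K -> 0 < tau -> tau < T -> c * tau < 1 ->
  cont_on 0 T (xif c K tau) /\
  (forall s, 0 <= s <= T -> 0 < xif c K tau s <= 1) /\
  xif c K tau 0 = 1 /\
  (forall s1 s2, 0 <= s1 -> s1 < s2 -> s2 <= tau -> xif c K tau s2 < xif c K tau s1) /\
  (forall s1 s2, tau <= s1 -> s1 < s2 -> s2 <= T -> xif c K tau s1 < xif c K tau s2) /\
  xif c K tau T < 1.
Proof.
  intros Hc HK Ht HT Hct.
  assert (Hc2 : 0 < c * tau) by nra.
  split; [|split; [|split; [|split; [|split]]]].
  - intros t Ht' eps He.
    set (L := c + c * tau * K + 1).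
    assert (HL : 0 < L) by (unfold L; nra).
    exists (eps / L). split; [apply Rdiv_lt_0_compat; lra|].
    intros s Hs Hst. unfold xif.
    replace (1 - c * Rmin s tau + xi2 (c * tau) K tau (Rmax s tau) - (1 - c * tau) -
      (1 - c * Rmin t tau + xi2 (c * tau) K tau (Rmax t tau) - (1 - c * tau)))
      with ((- c) * (Rmin s tau - Rmin t tau) + (xi2 (c * tau) K tau (Rmax s tau) - xi2 (c * tau) K tau (Rmax t tau))) by ring.
    eapply Rle_lt_trans; [apply Rabs_triang|]. rewrite Rabs_mult, Rabs_Ropp, Rabs_right by lra.
    pose proof (Rmin_lip s t tau). pose proof (Rmax_lip1 s t tau).
    pose proof (xi2_lip (c * tau) K tau (Rmax t tau) (Rmax s tau) Hc2 HK (Rmax_r _ _) (Rmax_r _ _)).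
    assert (Rabs (s - t) * L < eps).
    { apply (Rmult_lt_compat_r L) in Hst; auto. unfold Rdiv in Hst. rewrite Rmult_assoc, Rinv_l, Rmult_1_r in Hst by lra. lra. }
    assert (0 <= Rabs (s - t)) by apply Rabs_pos.
    assert (c * Rabs (Rmin s tau - Rmin t tau) <= c * Rabs (s - t)) by (apply Rmult_le_compat_l; lra).
    assert (c * tau * K * Rabs (Rmax s tau - Rmax t tau) <= c * tau * K * Rabs (s - t)) by (apply Rmult_le_compat_l; nra).
    unfold L in *. nra.
  - intros s Hs. destruct (Rle_dec s tau).
    + rewrite xif_left by auto. nra.
    + rewrite xif_right by lra. pose proof (xi2_range (c * tau) K tau s Hc2 HK ltac:(lra)). lra.
  - rewrite xif_left by lra. ring.
  - intros s1 s2 H1 H2 H3. rewrite !xif_left by lra. nra.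
  - intros s1 s2 H1 H2 H3. rewrite !xif_right by lra. apply xi2_strict; auto.
  - rewrite xif_right by lra. apply xi2_range; auto; lra.
Qed.

Lemma fin_delta (P : nat -> R -> Prop) N :
  (forall c del del', 0 < del' <= del -> P c del -> P c del') ->
  (forall c, (c < N)%nat -> exists del, 0 < del /\ P c del) ->
  exists del, 0 < del /\ forall c, (c < N)%nat -> P c del.
Proof.
  intros Hm. induction N; intros H.
  - exists 1. split; [lra|]. intros; lia.
  - destruct IHN as [d1 [Hd1 H1]]. { intros; apply H; lia. }
    destruct (H N ltac:(lia)) as [d2 [Hd2 H2]].
    exists (Rmin d1 d2). split; [apply Rmin_glb_lt; auto|].
    intros c Hc. destruct (Nat.eq_dec c N) as [->|].
    + apply (Hm _ d2); auto. split; [apply Rmin_glb_lt; auto|apply Rmin_r].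
    + apply (Hm _ d1); [split; [apply Rmin_glb_lt; auto|apply Rmin_l]|]. apply H1; lia.
Qed.

Lemma deriv_vec d (f : R -> nat -> R) (g : nat -> R) t :
  (forall c, (c < d)%nat -> derivable_pt_lim (fun s => f s c) t (g c)) ->
  forall eps, 0 < eps -> exists del, 0 < del /\ forall h, 0 < h < del ->
    vnorm d (fun c => f (t + h) c - f t c - h * g c) <= h * eps.
Proof.
  intros Hd eps He.
  set (e' := eps / (INR d + 1)).
  assert (He' : 0 < e') by (unfold e'; apply Rdiv_lt_0_compat; [lra|pose proof (pos_INR d); lra]).
  destruct (fin_delta (fun c del => forall h, 0 < h < del -> Rabs (f (t + h) c - f t c - h * g c) <= h * e') d)
    as [del [Hdel Hall]].
  - intros c del del' Hdd HP h Hh. apply HP. lra.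
  - intros c Hc. destruct (Hd c Hc e' He') as [[del Hdel0] Hdel].
    exists del. split; auto. intros h Hh.
    assert (Hne : h <> 0) by lra.
    assert (Habs : Rabs h < del) by (rewrite Rabs_right; lra).
    specialize (Hdel h Hne Habs). simpl in Hdel.
    replace (f (t + h) c - f t c - h * g c) with (h * ((f (t + h) c - f t c) / h - g c)) by (field; lra).
    rewrite Rabs_mult, Rabs_right by lra. apply Rmult_le_compat_l; lra.
  - exists del. split; auto. intros h Hh.
    eapply Rle_trans; [apply vnorm_le_abs|].
    eapply Rle_trans; [apply (rsum_le _ _ (fun _ => h * e')); intros; apply Hall; auto|].
    rewrite rsum_const. unfold e'.
    assert (0 <= INR d) by apply pos_INR.
    replace (INR d * (h * (eps / (INR d + 1)))) with (h * eps * (INR d / (INR d + 1))) by (field; lra).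
    assert (INR d / (INR d + 1) <= 1).
    { apply (Rmult_le_reg_r (INR d + 1)); [lra|]. unfold Rdiv. rewrite Rmult_assoc, Rinv_l by lra. lra. }
    assert (0 <= h * eps) by nra. nra.
Qed.

Lemma rsum_fam n k f : rsum (S (n + k)) f = rsum n f + rsum k (fun j => f (n + j)%nat) + f (n + k)%nat.
Proof. rewrite rsum_S, rsum_split. reflexivity. Qed.

Section Rate.
Variables (n k d : nat) (sg : R -> digraph)
  (a b : nat -> nat -> (nat -> nat -> R) -> (nat -> nat -> R) -> R -> R)
  (u : nat -> (nat -> nat -> R) -> R -> nat -> R)
  (w : nat -> R -> nat -> R) (x y : R -> nat -> nat -> R) (Z : R) (l : nat) (t : R).

Lemma rate_lemma : (1 <= k)%nat ->
  (forall q, (q < n)%nat -> 0 <= a l q (x t) (y t) t) ->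
  (forall j, (j < k)%nat -> 0 <= b l j (x t) (y t) t) ->
  (forall c, (c < d)%nat -> derivable_pt_lim (fun s => x s l c) t (follower_rhs n k sg a b w x y l c t)) ->
  (forall j c, (j < k)%nat -> (c < d)%nat -> derivable_pt_lim (fun s => y s j c) t (u j (y t) t c)) ->
  vnorm d (fun c => w l t c) <= Z ->
  (forall j, (j < k)%nat -> vnorm d (fun c => u j (y t) t c) <= Z) ->
  forall eta, 0 < eta -> exists del, 0 < del /\ forall h, 0 < h < del ->
    hull_dist d k (x (t + h) l) (y (t + h)) <= hull_dist d k (x t l) (y t) +
      h * (rsum n (fun q => if sg t (Fol q) (Fol l) then a l q (x t) (y t) t *
              (hull_dist d k (x t q) (y t) - hull_dist d k (x t l) (y t)) else 0) + 2 * Z + eta).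
Proof.
  intros Hk Ha Hb Hdx Hdy HZw HZu eta Heta.
  set (V := fun q => hull_dist d k (x t q) (y t)).
  set (A := fun q => if sg t (Fol q) (Fol l) then a l q (x t) (y t) t else 0).
  set (B := fun j => if sg t (Lead j) (Fol l) then b l j (x t) (y t) t else 0).
  assert (HA : forall q, (q < n)%nat -> 0 <= A q) by (intros q Hq; unfold A; destruct (sg t _ _); [apply Ha; auto|lra]).
  assert (HB : forall j, (j < k)%nat -> 0 <= B j) by (intros j Hj; unfold B; destruct (sg t _ _); [apply Hb; auto|lra]).
  set (SA := rsum n A). set (SB := rsum k B).
  assert (HSA : 0 <= SA) by (apply rsum_nonneg; auto).
  assert (HSB : 0 <= SB) by (apply rsum_nonneg; auto).
  set (e3 := eta / 3).
  assert (He3 : 0 < e3) by (unfold e3; lra).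
  destruct (deriv_vec d (fun s c => x s l c) (fun c => follower_rhs n k sg a b w x y l c t) t Hdx e3 He3)
    as [dx [Hdx0 Hdx1]].
  destruct (fin_delta (fun j del => forall h, 0 < h < del ->
      vnorm d (fun c => y (t + h) j c - y t j c - h * u j (y t) t c) <= h * e3) k) as [dy [Hdy0 Hdy1]].
  { intros j del del' Hdd HP h Hh. apply HP; lra. }
  { intros j Hj. apply (deriv_vec d (fun s c => y s j c) (fun c => u j (y t) t c) t); auto. }
  set (del := Rmin (Rmin dx dy) (1 / (SA + SB + 1))).
  assert (Hdel1 : del <= dx) by (unfold del; eapply Rle_trans; [apply Rmin_l|apply Rmin_l]).
  assert (Hdel2 : del <= dy) by (unfold del; eapply Rle_trans; [apply Rmin_l|apply Rmin_r]).
  assert (Hdel3 : del <= 1 / (SA + SB + 1)) by (unfold del; apply Rmin_r).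
  assert (Hdel0 : 0 < del).
  { unfold del. apply Rmin_glb_lt; [apply Rmin_glb_lt; auto|apply Rdiv_lt_0_compat; lra]. }
  exists del. split; auto. intros h Hh.
  assert (HhS : h * (SA + SB) <= 1).
  { assert (h * (SA + SB + 1) <= 1).
    { apply (Rmult_le_compat_r (SA + SB + 1)) in Hdel3; [|lra].
      unfold Rdiv in Hdel3. rewrite Rmult_1_l, Rinv_l in Hdel3 by lra.
      assert (h * (SA + SB + 1) <= del * (SA + SB + 1)) by (apply Rmult_le_compat_r; lra). lra. }
    assert (h * (SA + SB + 1) = h * (SA + SB) + h) by ring. lra. }
  assert (HY : forall j, (j < k)%nat -> vnorm d (fun c => y (t + h) j c - y t j c) <= h * (Z + e3)).
  { intros j Hj.
    rewrite (vnorm_ext d _ (fun c => h * u j (y t) t c + (y (t + h) j c - y t j c - h * u j (y t) t c)))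
      by (intros; ring).
    eapply Rle_trans; [apply vnorm_triang|].
    rewrite vnorm_scal, Rabs_right by lra.
    assert (vnorm d (fun c => y (t + h) j c - y t j c - h * u j (y t) t c) <= h * e3) by (apply Hdy1; auto; lra).
    assert (h * vnorm d (u j (y t) t) <= h * Z) by (apply Rmult_le_compat_l; [lra|apply HZu; auto]).
    lra. }
  assert (Hb1 : hull_dist d k (x (t + h) l) (y (t + h)) <= hull_dist d k (x (t + h) l) (y t) + h * (Z + e3))
    by (apply D_haus; auto).
  set (f := fun c => follower_rhs n k sg a b w x y l c t).
  set (P1 := fun c => x t l c + h * f c).
  assert (Hb2 : hull_dist d k (x (t + h) l) (y t) <= hull_dist d k P1 (y t) + h * e3).
  { eapply Rle_trans; [apply (D_lip d k P1)|]; auto.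
    apply Rplus_le_compat_l. unfold P1.
    rewrite (vnorm_ext d _ (fun c => x (t + h) l c - x t l c - h * f c)) by (intros; ring).
    apply Hdx1; lra. }
  set (P2 := fun c => x t l c + h * (f c - w l t c)).
  assert (Hb3 : hull_dist d k P1 (y t) <= hull_dist d k P2 (y t) + h * Z).
  { eapply Rle_trans; [apply (D_lip d k P2)|]; auto.
    apply Rplus_le_compat_l. unfold P1, P2.
    rewrite (vnorm_ext d _ (fun c => h * w l t c)) by (intros; ring).
    rewrite vnorm_scal, Rabs_right by lra. apply Rmult_le_compat_l; [lra|auto]. }
  set (fam := fun q => if Nat.ltb q n then x t q else if Nat.ltb q (n + k) then y t (q - n)%nat else x t l).
  set (al := fun q => if Nat.ltb q n then h * A q else if Nat.ltb q (n + k) then h * B (q - n)%nat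
                      else 1 - h * (SA + SB)).
  assert (Eq1 : forall q, (q < n)%nat -> Nat.ltb q n = true) by (intros; apply Nat.ltb_lt; auto).
  assert (Eq2 : forall j, Nat.ltb (n + j) n = false) by (intros; apply Nat.ltb_ge; lia).
  assert (Eq3 : forall j, (j < k)%nat -> Nat.ltb (n + j) (n + k) = true) by (intros; apply Nat.ltb_lt; lia).
  assert (Eq4 : Nat.ltb (n + k) (n + k) = false) by (apply Nat.ltb_ge; lia).
  assert (Eq5 : forall j, (n + j - n = j)%nat) by (intros; lia).
  assert (Hcomb : hull_dist d k P2 (y t) <= rsum (S (n + k)) (fun q => al q * hull_dist d k (fam q) (y t))).
  { apply D_comb; auto.
    - intros q Hq. unfold al. destruct (Nat.ltb q n) eqn:E1.
      + apply Rmult_le_pos; [lra|]. apply HA. apply Nat.ltb_lt; auto.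
      + destruct (Nat.ltb q (n + k)) eqn:E2.
        * apply Rmult_le_pos; [lra|]. apply HB. apply Nat.ltb_ge in E1. apply Nat.ltb_lt in E2. lia.
        * lra.
    - rewrite rsum_fam.
      rewrite (rsum_ext n al (fun q => h * A q)) by (intros q Hq; unfold al; rewrite Eq1; auto).
      rewrite (rsum_ext k (fun j => al (n + j)%nat) (fun j => h * B j))
        by (intros j Hj; unfold al; rewrite Eq2, Eq3, Eq5; auto).
      replace (al (n + k)%nat) with (1 - h * (SA + SB)) by (unfold al; rewrite Eq2, Eq4; auto).
      rewrite !rsum_scal. unfold SA, SB. ring.
    - intros c Hc. unfold P2, f, follower_rhs. rewrite rsum_fam.
      rewrite (rsum_ext n (fun q => al q * fam q c) (fun q => h * (A q * x t q c)))
        by (intros q Hq; unfold al, fam; rewrite Eq1; auto; ring).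
      rewrite (rsum_ext k (fun j => al (n + j)%nat * fam (n + j)%nat c) (fun j => h * (B j * y t j c)))
        by (intros j Hj; unfold al, fam; rewrite Eq2, Eq3, Eq5; auto; ring).
      replace (al (n + k)%nat * fam (n + k)%nat c) with ((1 - h * (SA + SB)) * x t l c)
        by (unfold al, fam; rewrite Eq2, Eq4; auto).
      rewrite (rsum_ext n (fun q => if sg t (Fol q) (Fol l) then a l q (x t) (y t) t * (x t q c - x t l c) else 0)
                 (fun q => A q * x t q c + (- x t l c) * A q))
        by (intros q Hq; unfold A; destruct (sg t _ _); ring).
      rewrite (rsum_ext k (fun j => if sg t (Lead j) (Fol l) then b l j (x t) (y t) t * (y t j c - x t l c) else 0)
                 (fun j => B j * y t j c + (- x t l c) * B j))
        by (intros j Hj; unfold B; destruct (sg t _ _); ring).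
      rewrite !rsum_plus, !rsum_scal. unfold SA, SB. ring. }
  assert (Hcomb2 : rsum (S (n + k)) (fun q => al q * hull_dist d k (fam q) (y t)) <=
     h * rsum n (fun q => A q * V q) + (1 - h * (SA + SB)) * V l).
  { rewrite rsum_fam.
    rewrite (rsum_ext n (fun q => al q * hull_dist d k (fam q) (y t)) (fun q => h * (A q * V q)))
      by (intros q Hq; unfold al, fam, V; rewrite Eq1; auto; ring).
    rewrite (rsum_ext k (fun j => al (n + j)%nat * hull_dist d k (fam (n + j)%nat) (y t))
               (fun j => h * (B j * hull_dist d k (y t j) (y t))))
      by (intros j Hj; unfold al, fam; rewrite Eq2, Eq3, Eq5; auto; ring).
    replace (al (n + k)%nat * hull_dist d k (fam (n + k)%nat) (y t)) with ((1 - h * (SA + SB)) * V l)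
      by (unfold al, fam, V; rewrite Eq2, Eq4; auto).
    rewrite rsum_scal, rsum_scal.
    assert (rsum k (fun j => B j * hull_dist d k (y t j) (y t)) <= 0).
    { replace 0 with (rsum k (fun _ => 0)) by (rewrite rsum_const; ring).
      apply rsum_le. intros j Hj. pose proof (D_vertex d k (y t) j Hk Hj). pose proof (HB j Hj). nra. }
    assert (h * rsum k (fun j => B j * hull_dist d k (y t j) (y t)) <= 0) by nra.
    lra. }
  assert (HT : rsum n (fun q => if sg t (Fol q) (Fol l) then a l q (x t) (y t) t *
              (hull_dist d k (x t q) (y t) - hull_dist d k (x t l) (y t)) else 0)
        = rsum n (fun q => A q * V q) - SA * V l).
  { rewrite (rsum_ext n _ (fun q => A q * V q + (- V l) * A q))
      by (intros q Hq; unfold A, V; destruct (sg t _ _); ring).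
    rewrite rsum_plus, rsum_scal. unfold SA. ring. }
  rewrite HT.
  assert (HVl : 0 <= V l) by (apply D_nonneg; auto).
  assert (0 <= h * SB * V l) by (apply Rmult_le_pos; [nra|auto]).
  fold (V l) in *. unfold e3 in *.
  assert (HH := Rle_trans _ _ _ Hcomb Hcomb2). assert (0 <= h * eta) by (apply Rmult_le_pos; lra). lra.
Qed.
End Rate.

Lemma vnorm_small d v e : 0 <= e -> (forall c, (c < d)%nat -> Rabs (v c) < e) -> vnorm d v <= INR d * e.
Proof.
  intros He H. eapply Rle_trans; [apply vnorm_le_abs|]. rewrite <- rsum_const.
  apply rsum_le. intros; left; auto.
Qed.

Lemma Vcont k d (x y : R -> nat -> nat -> R) l a0 b0 : (1 <= k)%nat -> 0 <= a0 ->
  (forall c, (c < d)%nat -> cont_nonneg (fun t => x t l c)) ->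
  (forall j c, (j < k)%nat -> (c < d)%nat -> cont_nonneg (fun t => y t j c)) ->
  ccont a0 b0 (fun t => hull_dist d k (x t l) (y t)).
Proof.
  intros Hk Ha0 Hx Hy t Ht eps He.
  set (e' := eps / (2 * (INR d + 1))).
  assert (Hd : 0 <= INR d) by apply pos_INR.
  assert (He' : 0 < e') by (unfold e'; apply Rdiv_lt_0_compat; lra).
  assert (Hde : 2 * (INR d * e') < eps).
  { unfold e'. replace (2 * (INR d * (eps / (2 * (INR d + 1))))) with (eps * (INR d / (INR d + 1))) by (field; lra).
    assert (INR d / (INR d + 1) < 1).
    { apply (Rmult_lt_reg_r (INR d + 1)); [lra|]. unfold Rdiv. rewrite Rmult_assoc, Rinv_l by lra. lra. }
    nra. }
  destruct (fin_delta (fun c del => forall s, 0 <= s -> Rabs (s - t) < del -> Rabs (x s l c - x t l c) < e') d)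
    as [dx [Hdx0 Hdx]].
  { intros c del del' Hdd HP s Hs Hst. apply HP; auto; lra. }
  { intros c Hc. destruct (Hx c Hc t ltac:(lra) e' He') as [del [Hdel Hdel']]. exists del; split; [lra|].
    intros s Hs Hst. apply Hdel'; auto. }
  destruct (fin_delta (fun j del => forall c, (c < d)%nat -> forall s, 0 <= s -> Rabs (s - t) < del ->
       Rabs (y s j c - y t j c) < e') k) as [dy [Hdy0 Hdy]].
  { intros j del del' Hdd HP c Hc s Hs Hst. apply HP; auto; lra. }
  { intros j Hj. apply (fin_delta (fun c del => forall s, 0 <= s -> Rabs (s - t) < del -> Rabs (y s j c - y t j c) < e')).
    - intros c del del' Hdd HP s Hs Hst. apply HP; auto; lra.
    - intros c Hc. destruct (Hy j c Hj Hc t ltac:(lra) e' He') as [del [Hdel Hdel']]. exists del; split; [lra|].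
      intros s Hs Hst. apply Hdel'; auto. }
  exists (Rmin dx dy). split; [apply Rmin_glb_lt; auto|].
  intros s Hs Hst.
  assert (Hst1 : Rabs (s - t) < dx) by (pose proof (Rmin_l dx dy); lra).
  assert (Hst2 : Rabs (s - t) < dy) by (pose proof (Rmin_r dx dy); lra).
  assert (HX1 : vnorm d (fun c => x s l c - x t l c) <= INR d * e').
  { apply vnorm_small; [lra|]. intros c Hc. apply Hdx; auto; lra. }
  assert (HX2 : vnorm d (fun c => x t l c - x s l c) <= INR d * e') by (rewrite vnorm_sym; auto).
  assert (HY1 : forall j, (j < k)%nat -> vnorm d (fun c => y s j c - y t j c) <= INR d * e').
  { intros j Hj. apply vnorm_small; [lra|]. intros c Hc. apply Hdy; auto; lra. }
  assert (HY2 : forall j, (j < k)%nat -> vnorm d (fun c => y t j c - y s j c) <= INR d * e')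
    by (intros j Hj; rewrite vnorm_sym; auto).
  pose proof (D_haus d k (x s l) (y t) (y s) _ Hk HY1).
  pose proof (D_lip d k (x t l) (x s l) (y t) Hk).
  pose proof (D_haus d k (x t l) (y s) (y t) _ Hk HY2).
  pose proof (D_lip d k (x s l) (x t l) (y s) Hk).
  apply Rabs_def1; lra.
Qed.

Lemma le_eps_mul a b c : 0 <= c -> (forall eps, 0 < eps -> a <= b + eps * c) -> a <= b.
Proof.
  intros Hc H. apply le_epsilon. intros eps He.
  specialize (H (eps / (c + 1)) ltac:(apply Rdiv_lt_0_compat; lra)).
  assert (eps / (c + 1) * c <= eps).
  { replace (eps / (c + 1) * c) with (eps * (c / (c + 1))) by (field; lra).
    assert (c / (c + 1) <= 1).
    { apply (Rmult_le_reg_r (c + 1)); [lra|]. unfold Rdiv. rewrite Rmult_assoc, Rinv_l by lra. lra. }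
    nra. }
  lra.
Qed.

Lemma ccont_minus a b f g : ccont a b f -> ccont a b g -> ccont a b (fun s => f s - g s).
Proof.
  intros Hf Hg t Ht eps He.
  destruct (Hf t Ht (eps/2) ltac:(lra)) as [d1 [Hd1 H1]].
  destruct (Hg t Ht (eps/2) ltac:(lra)) as [d2 [Hd2 H2]].
  exists (Rmin d1 d2). split; [apply Rmin_glb_lt; auto|]. intros s Hs Hst.
  specialize (H1 s Hs ltac:(pose proof (Rmin_l d1 d2); lra)).
  specialize (H2 s Hs ltac:(pose proof (Rmin_r d1 d2); lra)).
  replace (f s - g s - (f t - g t)) with ((f s - f t) - (g s - g t)) by ring.
  eapply Rle_lt_trans; [apply Rabs_triang|]. rewrite Rabs_Ropp. lra.
Qed.

Lemma ccont_plus a b f g : ccont a b f -> ccont a b g -> ccont a b (fun s => f s + g s).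
Proof.
  intros Hf Hg t Ht eps He.
  destruct (Hf t Ht (eps/2) ltac:(lra)) as [d1 [Hd1 H1]].
  destruct (Hg t Ht (eps/2) ltac:(lra)) as [d2 [Hd2 H2]].
  exists (Rmin d1 d2). split; [apply Rmin_glb_lt; auto|]. intros s Hs Hst.
  specialize (H1 s Hs ltac:(pose proof (Rmin_l d1 d2); lra)).
  specialize (H2 s Hs ltac:(pose proof (Rmin_r d1 d2); lra)).
  replace (f s + g s - (f t + g t)) with ((f s - f t) + (g s - g t)) by ring.
  eapply Rle_lt_trans; [apply Rabs_triang|]. lra.
Qed.

Lemma ccont_affine a b al be t0 : ccont a b (fun s => al + be * (s - t0)).
Proof.
  intros t Ht eps He. exists (eps / (Rabs be + 1)). split; [apply Rdiv_lt_0_compat; [lra|pose proof (Rabs_pos be); lra]|].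
  intros s Hs Hst. replace (al + be * (s - t0) - (al + be * (t - t0))) with (be * (s - t)) by ring.
  rewrite Rabs_mult. pose proof (Rabs_pos be). pose proof (Rabs_pos (s - t)).
  assert (Rabs (s - t) * (Rabs be + 1) < eps).
  { apply (Rmult_lt_compat_r (Rabs be + 1)) in Hst; [|lra]. unfold Rdiv in Hst.
    rewrite Rmult_assoc, Rinv_l, Rmult_1_r in Hst by lra. lra. }
  nra.
Qed.

Lemma ccont_xi (xi : R -> R) T t0 M : 0 <= M -> cont_on 0 T xi -> ccont t0 (t0 + T) (fun s => xi (s - t0) * M).
Proof.
  intros HM Hc t Ht eps He.
  destruct (Hc (t - t0) ltac:(lra) (eps / (M + 1)) ltac:(apply Rdiv_lt_0_compat; lra)) as [del [Hdel H]].
  exists del. split; [lra|]. intros s Hs Hst.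
  specialize (H (s - t0) ltac:(lra) ltac:(replace (s - t0 - (t - t0)) with (s - t) by ring; auto)).
  replace (xi (s - t0) * M - xi (t - t0) * M) with ((xi (s - t0) - xi (t - t0)) * M) by ring.
  rewrite Rabs_mult, (Rabs_right M) by lra.
  assert (eps / (M + 1) * M <= eps).
  { replace (eps / (M + 1) * M) with (eps * (M / (M + 1))) by (field; lra).
    assert (M / (M + 1) <= 1).
    { apply (Rmult_le_reg_r (M + 1)); [lra|]. unfold Rdiv. rewrite Rmult_assoc, Rinv_l by lra. lra. }
    nra. }
  destruct (Req_dec M 0) as [->|]; [rewrite Rmult_0_r; lra|].
  assert (Rabs (xi (s - t0) - xi (t - t0)) * M < eps / (M + 1) * M) by (apply Rmult_lt_compat_r; lra).
  lra.
Qed.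

Lemma max_hull_ge n d k X Y l : (l < n)%nat -> hull_dist d k (X l) Y <= max_hull_dist n d k X Y.
Proof.
  intros Hl. unfold max_hull_dist.
  assert (In l (seq 0 n)) by (apply in_seq; lia).
  induction (seq 0 n) as [|q s IH]; simpl in *; [tauto|].
  destruct H as [->|H]; [apply Rmax_l|]. eapply Rle_trans; [apply IH; auto|apply Rmax_r].
Qed.

Lemma max_hull_nonneg n d k X Y : 0 <= max_hull_dist n d k X Y.
Proof.
  unfold max_hull_dist. induction (seq 0 n); simpl; [lra|]. eapply Rle_trans; [apply IHl|apply Rmax_r].
Qed.

Lemma z_bounds n k d u w y t :
  (forall i, (i < n)%nat -> vnorm d (w i t) <= z_norm n k d u w y t) /\
  (forall j, (j < k)%nat -> vnorm d (u j (y t) t) <= z_norm n k d u w y t).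
Proof.
  assert (HU : 0 <= rsum k (fun j => rsum d (fun c => u j (y t) t c ^ 2)))
    by (apply rsum_nonneg; intros; apply rsum_nonneg; intros; apply pow2_ge_0).
  assert (HW : 0 <= rsum n (fun i => rsum d (fun c => w i t c ^ 2)))
    by (apply rsum_nonneg; intros; apply rsum_nonneg; intros; apply pow2_ge_0).
  split.
  - intros i Hi. unfold vnorm, z_norm. apply sqrt_le_1_alt.
    pose proof (rsum_term_le n (fun i => rsum d (fun c => w i t c ^ 2)) i
      ltac:(intros; apply rsum_nonneg; intros; apply pow2_ge_0) Hi). cbv beta in H. lra.
  - intros j Hj. unfold vnorm, z_norm. apply sqrt_le_1_alt.
    pose proof (rsum_term_le k (fun j => rsum d (fun c => u j (y t) t c ^ 2)) j
      ltac:(intros; apply rsum_nonneg; intros; apply pow2_ge_0) Hj). cbv beta in H. lra.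
Qed.

Theorem lemma6 (n : nat) (a_lo a_hi tauD Tstar mu0 : R) :
  (2 <= n)%nat -> 0 < a_lo -> a_lo <= a_hi -> 0 < tauD -> Tstar > tauD ->
  0 < mu0 < 1 ->
  exists (xi : R -> R) (gamma2 : R),
    cont_on 0 Tstar xi /\
    (forall s, 0 <= s <= Tstar -> 0 < xi s <= 1) /\
    xi 0 = 1 /\
    (forall s1 s2, 0 <= s1 -> s1 < s2 -> s2 <= tauD -> xi s2 < xi s1) /\
    (forall s1 s2, tauD <= s1 -> s1 < s2 -> s2 <= Tstar -> xi s1 < xi s2) /\
    xi Tstar < 1 /\
    gamma2 > 0 /\
    forall (k d : nat) (b_lo : R) (sg : R -> digraph)
      (a b : nat -> nat -> (nat -> nat -> R) -> (nat -> nat -> R) -> R -> R)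
      (u : nat -> (nat -> nat -> R) -> R -> nat -> R)
      (w : nat -> R -> nat -> R)
      (x y : R -> nat -> nat -> R) (Z : R),
      (1 <= k)%nat -> (1 <= d)%nat -> 0 < b_lo ->
      dwell_signal tauD sg ->
      system_data n k d a_lo a_hi b_lo a b u w ->
      trajectory n k d sg a b u w x y ->
      is_lub (fun r => exists t, 0 <= t /\ r = z_norm n k d u w y t) Z ->
      forall (t0 d0 : R) (i m : nat),
        0 <= t0 -> 0 < d0 -> (i < n)%nat -> (m < n)%nat ->
        (forall t, t0 <= t < t0 + tauD -> sg t (Fol i) (Fol m) = true) ->
        (forall t, t0 <= t < t0 + tauD ->
           hull_dist d k (x t i) (y t)
             <= mu0 * max_hull_dist n d k (x t0) (y t0) + d0) ->
        forall t, t0 <= t <= t0 + Tstar ->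
          hull_dist d k (x t m) (y t)
            <= xi (t - t0) * max_hull_dist n d k (x t0) (y t0) + gamma2 * Z + d0.
Proof.
  intros Hn Halo Hahi Htau HT Hmu. destruct Hmu as [Hmu1 Hmu2].
  set (K := INR n * a_hi).
  assert (HK : 0 < K).
  { unfold K. assert (2 <= INR n) by (replace 2 with (INR 2) by (simpl; lra); apply le_INR; lia). nra. }
  set (A1 := a_lo + K).
  set (c := a_lo * (1 - mu0) / (1 + A1 * tauD)).
  assert (HA1 : 0 < 1 + A1 * tauD) by (unfold A1; nra).
  assert (Hc : 0 < c) by (unfold c; apply Rdiv_lt_0_compat; [apply Rmult_lt_0_compat; lra|lra]).
  assert (Hcdef : c * (1 + A1 * tauD) = a_lo * (1 - mu0)) by (unfold c; field; lra).
  assert (Hct1 : c * tauD < 1 - mu0).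
  { assert (c * a_lo * tauD < a_lo * (1 - mu0)).
    { rewrite <- Hcdef. unfold A1. assert (0 < c * K * tauD) by (apply Rmult_lt_0_compat; [apply Rmult_lt_0_compat|]; assumption). replace (c * (1 + (a_lo + K) * tauD)) with (c + c * a_lo * tauD + c * K * tauD) by ring. lra. }
    assert (a_lo * (c * tauD) < a_lo * (1 - mu0)) by nra.
    apply Rmult_lt_reg_l in H0; auto. }
  assert (Hct : c * tauD < 1) by lra.
  assert (HKdef : K = INR n * a_hi) by reflexivity.
  assert (HA1def : A1 = a_lo + K) by reflexivity.
  clearbody c A1 K.
  destruct (xif_props c K tauD Tstar Hc HK Htau HT Hct) as [P1 [P2 [P3 [P4 [P5 P6]]]]].
  exists (xif c K tauD), (2 * Tstar).
  split; [auto|]. split; [auto|]. split; [auto|]. split; [auto|]. split; [auto|]. split; [auto|].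
  split; [lra|].
  intros k d b_lo sg a b u w x y Z Hk Hd Hblo Hdw Hsys Htraj HZ t0 d0 i m Ht0 Hd0 Hi Hm Harc Hhyp t Ht.
  destruct Htraj as [Hxc [Hyc [D0 [HDfin HDder]]]].
  destruct Hsys as [Hadata [Hbdata _]].
  assert (HZ0 : forall s, 0 <= s -> z_norm n k d u w y s <= Z) by (intros s Hs; apply (proj1 HZ); exists s; auto).
  assert (HZnn : 0 <= Z) by (eapply Rle_trans; [unfold z_norm; apply sqrt_pos|apply (HZ0 0); lra]).
  set (M := max_hull_dist n d k (x t0) (y t0)).
  assert (HM : 0 <= M) by apply max_hull_nonneg.
  assert (HM0 : forall l, (l < n)%nat -> hull_dist d k (x t0 l) (y t0) <= M) by (intros; apply max_hull_ge; auto).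
  set (Tb := t0 + Tstar). assert (HTb : Tb = t0 + Tstar) by reflexivity.
  destruct (HDfin Tb) as [Ls HLs].
  set (E := (t0 + tauD) :: Ls).
  assert (HnotD : forall s, t0 < s <= Tb -> ~ In s E -> ~ D0 s).
  { intros s Hs HE HDs. apply HE. right. apply HLs; auto; lra. }
  assert (Hrate : forall l, (l < n)%nat -> forall s, t0 < s <= Tb -> ~ In s E -> forall eta, 0 < eta ->
    exists del, 0 < del /\ forall h, 0 < h < del ->
    hull_dist d k (x (s + h) l) (y (s + h)) <= hull_dist d k (x s l) (y s) +
      h * (rsum n (fun q => if sg s (Fol q) (Fol l) then a l q (x s) (y s) s *
              (hull_dist d k (x s q) (y s) - hull_dist d k (x s l) (y s)) else 0) + 2 * Z + eta)).
  { intros l Hl s Hs HE eta Heta. destruct (HDder s ltac:(lra) (HnotD s Hs HE)) as [Hdy Hdx].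
    assert (H1 : forall q, (q < n)%nat -> 0 <= a l q (x s) (y s) s).
    { intros q Hq. destruct (Hadata l q Hl Hq) as [_ Hb']. specialize (Hb' (x s) (y s) s ltac:(lra)). lra. }
    assert (H2 : forall j, (j < k)%nat -> 0 <= b l j (x s) (y s) s).
    { intros j Hj. destruct (Hbdata l j Hl Hj) as [_ Hb']. specialize (Hb' (x s) (y s) s ltac:(lra)). lra. }
    assert (H3 : vnorm d (fun c => w l s c) <= Z).
    { eapply Rle_trans; [apply (proj1 (z_bounds n k d u w y s)); auto|apply HZ0; lra]. }
    assert (H4 : forall j, (j < k)%nat -> vnorm d (fun c => u j (y s) s c) <= Z).
    { intros j Hj. eapply Rle_trans; [apply (proj2 (z_bounds n k d u w y s)); auto|apply HZ0; lra]. }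
    apply (rate_lemma n k d sg a b u w x y Z l s); auto. }
  assert (Hcont : forall l, (l < n)%nat -> ccont t0 Tb (fun s => hull_dist d k (x s l) (y s))).
  { intros l Hl. apply Vcont; auto. }
  assert (HBo : forall s, t0 <= s <= Tb -> forall l, (l < n)%nat ->
      hull_dist d k (x s l) (y s) <= M + 2 * Z * (s - t0)).
  { intros s Hs l Hl. apply (le_eps_mul _ _ (s - t0)); [lra|]. intros eps Heps.
    set (F := fun q r => hull_dist d k (x r q) (y r) - (M + (2 * Z + eps) * (r - t0))).
    set (L := map F (seq 0 n)).
    assert (HFc : forall q, (q < n)%nat -> ccont t0 Tb (F q)).
    { intros q Hq. apply ccont_minus; [apply Hcont; auto|apply ccont_affine]. }
    assert (HLin : forall f, In f L -> exists q, (q < n)%nat /\ f = F q).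
    { intros f Hf. unfold L in Hf. apply in_map_iff in Hf. destruct Hf as [q [<- Hq]].
      apply in_seq in Hq. exists q; split; [lia|auto]. }
    assert (HinL : forall q, (q < n)%nat -> In (F q) L) by (intros q Hq; unfold L; apply in_map, in_seq; lia).
    assert (HG : fmax L s <= fmax L t0).
    { apply (mono E); [lra|apply (ccont_sub t0 Tb); [lra|lra|]|].
      { apply fmax_cont. intros f Hf. destruct (HLin f Hf) as [q [Hq ->]]. auto. }
      intros r Hr HrE. apply fmax_fwd. intros f Hf. destruct (HLin f Hf) as [q [Hq ->]].
      assert (HFle : F q r <= fmax L r) by (apply fmax_ge; auto).
      destruct (Rle_lt_or_eq_dec _ _ HFle) as [Hlt|Heq].
      - destruct (HFc q Hq r ltac:(lra) (fmax L r - F q r) ltac:(lra)) as [del [Hdel Hdl]].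
        exists (Rmin del (Tb - r)). split; [apply Rmin_glb_lt; lra|].
        intros r' Hr'. pose proof (Rmin_l del (Tb - r)). pose proof (Rmin_r del (Tb - r)).
        specialize (Hdl r' ltac:(lra) ltac:(rewrite Rabs_right; lra)). apply Rabs_def2 in Hdl. lra.
      - assert (Hmax : forall q', (q' < n)%nat -> hull_dist d k (x r q') (y r) <= hull_dist d k (x r q) (y r)).
        { intros q' Hq'. assert (F q' r <= fmax L r) by (apply fmax_ge; auto). unfold F in *. lra. }
        destruct (Hrate q Hq r ltac:(lra) HrE (eps/2) ltac:(lra)) as [del [Hdel Hdl]].
        exists del. split; auto. intros r' Hr'.
        specialize (Hdl (r' - r) ltac:(lra)). replace (r + (r' - r)) with r' in Hdl by ring.
        set (S := rsum n _) in Hdl.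
        assert (HS : S <= 0).
        { unfold S. apply Rle_trans with (rsum n (fun _ => 0)); [|rewrite rsum_const; lra].
          apply rsum_le. intros q' Hq'. destruct (sg r (Fol q') (Fol q)); [|lra].
          destruct (Hadata q q' Hq Hq') as [_ Ha']. specialize (Ha' (x r) (y r) r ltac:(lra)).
          specialize (Hmax q' Hq'). nra. }
        rewrite <- Heq. unfold F.
        assert ((r' - r) * S <= 0) by nra.
        assert (0 <= (r' - r) * eps) by nra.
        lra. }
    assert (HG0 : fmax L t0 <= 0).
    { apply fmax_le; [lra|]. intros f Hf. destruct (HLin f Hf) as [q [Hq ->]]. unfold F.
      specialize (HM0 q Hq). replace (t0 - t0) with 0 by ring. lra. }
    assert (F l s <= fmax L s) by (apply fmax_ge; auto).
    unfold F in H. lra. }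
  assert (Hxi_le1 : forall s, 0 <= s <= Tstar -> xif c K tauD s <= 1) by (intros; apply P2; auto).
  assert (Hkey : forall s, 0 <= s <= tauD -> A1 * xif c K tauD s >= a_lo * mu0 + K + c /\ mu0 < xif c K tauD s).
  { intros s Hs. rewrite xif_left by lra.
    assert (A1 * (1 - c * tauD) = a_lo * mu0 + K + c).
    { replace (A1 * (1 - c * tauD)) with (A1 - c * (1 + A1 * tauD) + c) by ring. rewrite Hcdef, HA1def. ring. }
    assert (HA1p : 0 < A1) by lra.
    assert (c * s <= c * tauD) by (apply Rmult_le_compat_l; lra).
    split; [|lra]. assert (A1 * (c * s) <= A1 * (c * tauD)) by (apply Rmult_le_compat_l; lra). nra. }
  apply (le_eps_mul _ _ (t - t0)); [lra|]. intros eps Heps.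
  set (F := fun r => hull_dist d k (x r m) (y r) - (xif c K tauD (r - t0) * M + (d0 + (2 * Z + eps) * (r - t0)))).
  assert (HFc : ccont t0 Tb F).
  { apply ccont_minus; [apply Hcont; auto|apply ccont_plus; [apply ccont_xi; auto|apply ccont_affine]]. }
  assert (HG : fmax (F :: nil) t <= fmax (F :: nil) t0).
  { apply (mono E); [lra|apply (ccont_sub t0 Tb); [lra|lra|]|].
    { apply fmax_cont. intros f [<-|[]]. auto. }
    intros r Hr HrE. apply fmax_fwd. intros f [<-|[]].
    assert (HFle : 0 <= fmax (F :: nil) r) by apply fmax_nonneg.
    destruct (Rlt_le_dec (F r) 0) as [Hlt|Hge].
    - destruct (HFc r ltac:(lra) (- F r) ltac:(lra)) as [del [Hdel Hdl]].
      exists (Rmin del (Tb - r)). split; [apply Rmin_glb_lt; lra|].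
      intros r' Hr'. pose proof (Rmin_l del (Tb - r)). pose proof (Rmin_r del (Tb - r)).
      specialize (Hdl r' ltac:(lra) ltac:(rewrite Rabs_right; lra)). apply Rabs_def2 in Hdl. lra.
    - assert (HFr : F r <= fmax (F :: nil) r) by (apply fmax_ge; left; auto).
      set (xr := xif c K tauD (r - t0)).
      assert (Hxr1 : xr <= 1) by (unfold xr; apply Hxi_le1; lra).
      assert (HVm : hull_dist d k (x r m) (y r) >= xr * M + d0 + (2 * Z + eps) * (r - t0)) by (unfold F in Hge; fold xr in Hge; lra).
      assert (Hepsr : 0 <= eps * (r - t0)) by nra.
      assert (Hq : forall q, (q < n)%nat -> hull_dist d k (x r q) (y r) - hull_dist d k (x r m) (y r) <= (1 - xr) * M).
      { intros q Hq. pose proof (HBo r ltac:(lra) q Hq). nra. }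
      set (beta := a_hi * ((1 - xr) * M)).
      assert (Hbeta : 0 <= beta) by (unfold beta; apply Rmult_le_pos; [lra|nra]).
      set (g := fun q => if sg r (Fol q) (Fol m) then a m q (x r) (y r) r *
              (hull_dist d k (x r q) (y r) - hull_dist d k (x r m) (y r)) else 0).
      assert (Hg : forall q, (q < n)%nat -> g q <= beta).
      { intros q Hq'. unfold g. destruct (sg r (Fol q) (Fol m)); [|lra].
        destruct (Hadata m q Hm Hq') as [_ Ha']. specialize (Ha' (x r) (y r) r ltac:(lra)).
        specialize (Hq q Hq'). unfold beta.
        set (zq := hull_dist d k (x r q) (y r) - hull_dist d k (x r m) (y r)) in *.
        destruct (Rle_dec zq 0).
        - assert (0 <= (1 - xr) * M) by nra. nra.
        - assert (a m q (x r) (y r) r * zq <= a_hi * zq) by (apply Rmult_le_compat_r; lra).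
          assert (a_hi * zq <= a_hi * ((1 - xr) * M)) by (apply Rmult_le_compat_l; lra). lra. }
      destruct (Hrate m Hm r ltac:(lra) HrE (eps / 2) ltac:(lra)) as [del [Hdel Hdl]].
      fold g in Hdl. change (rsum n (fun q => g q)) with (rsum n g) in Hdl.
      destruct (Rlt_le_dec (r - t0) tauD) as [Hlt|Hle].
      +
        assert (Hgi : g i <= a_lo * ((mu0 - xr) * M)).
        { unfold g. rewrite Harc by lra.
          destruct (Hadata m i Hm Hi) as [_ Ha']. specialize (Ha' (x r) (y r) r ltac:(lra)).
          pose proof (Hhyp r ltac:(lra)). fold M in H.
          destruct (Hkey (r - t0) ltac:(lra)) as [_ Hmx]. fold xr in Hmx.
          assert (Hz : hull_dist d k (x r i) (y r) - hull_dist d k (x r m) (y r) <= (mu0 - xr) * M) by nra.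
          assert (Hz0 : (mu0 - xr) * M <= 0) by nra.
          assert (a m i (x r) (y r) r * (hull_dist d k (x r i) (y r) - hull_dist d k (x r m) (y r)) <=
                  a_lo * (hull_dist d k (x r i) (y r) - hull_dist d k (x r m) (y r))) by nra.
          assert (a_lo * (hull_dist d k (x r i) (y r) - hull_dist d k (x r m) (y r)) <= a_lo * ((mu0 - xr) * M))
            by (apply Rmult_le_compat_l; lra).
          lra. }
        assert (HS : rsum n g <= - c * M).
        { eapply Rle_trans; [apply (rsum_one_plus n g i beta); auto|].
          destruct (Hkey (r - t0) ltac:(lra)) as [Hk1 _]. fold xr in Hk1.
          unfold beta. rewrite <- Rmult_assoc, <- HKdef.
          assert ((a_lo * mu0 + K + c - A1 * xr) * M <= 0) by (assert (a_lo * mu0 + K + c - A1 * xr <= 0) by lra; nra).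
          rewrite HA1def in H. nra. }
        exists (Rmin del (t0 + tauD - r)). split; [apply Rmin_glb_lt; lra|].
        intros r' Hr'. pose proof (Rmin_l del (t0 + tauD - r)). pose proof (Rmin_r del (t0 + tauD - r)).
        specialize (Hdl (r' - r) ltac:(lra)). replace (r + (r' - r)) with r' in Hdl by ring.
        eapply Rle_trans; [|apply HFr].
        unfold F. fold xr. unfold xr. rewrite !xif_left by lra.
        assert ((r' - r) * rsum n g <= (r' - r) * (- c * M)) by (apply Rmult_le_compat_l; lra).
        assert (0 <= (r' - r) * eps) by nra.
        lra.
      + assert (Hne : r - t0 <> tauD) by (intros Heq; apply HrE; left; lra).
        assert (Hgt : tauD < r - t0) by lra.
        assert (HS : rsum n g <= K * ((1 - xr) * M)).
        { eapply Rle_trans; [apply (rsum_le n g (fun _ => beta)); auto|]. rewrite rsum_const.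
          unfold beta. rewrite HKdef. lra. }
        set (eta' := eps / (4 * (M + 1))).
        assert (Heta' : 0 < eta') by (unfold eta'; apply Rdiv_lt_0_compat; lra).
        assert (HetaM : eta' * M <= eps / 4).
        { unfold eta'. replace (eps / (4 * (M + 1)) * M) with (eps / 4 * (M / (M + 1))) by (field; lra).
          assert (M / (M + 1) <= 1).
          { apply (Rmult_le_reg_r (M + 1)); [lra|]. unfold Rdiv. rewrite Rmult_assoc, Rinv_l by lra. lra. }
          assert (0 <= M / (M + 1)) by (unfold Rdiv; apply Rmult_le_pos; [lra|left; apply Rinv_0_lt_compat; lra]). nra. }
        assert (HK2 : 0 < eta' / (K * K)) by (apply Rdiv_lt_0_compat; nra).
        exists (Rmin del (eta' / (K * K))). split; [apply Rmin_glb_lt; lra|].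
        intros r' Hr'. pose proof (Rmin_l del (eta' / (K * K))). pose proof (Rmin_r del (eta' / (K * K))).
        specialize (Hdl (r' - r) ltac:(lra)). replace (r + (r' - r)) with r' in Hdl by ring.
        pose proof (xi2_lower (c * tauD) K tauD (r - t0) (r' - r) eta' ltac:(split; nra) HK ltac:(lra) ltac:(lra) Heta' ltac:(lra)) as Hx2.
        replace (r - t0 + (r' - r)) with (r' - t0) in Hx2 by ring.
        rewrite <- !xif_right in Hx2 by lra. fold xr in Hx2.
        eapply Rle_trans; [|apply HFr].
        unfold F. fold xr.
        assert ((r' - r) * rsum n g <= (r' - r) * (K * ((1 - xr) * M))) by (apply Rmult_le_compat_l; lra).
        assert ((xif c K tauD (r' - t0) - xr) * M >= (r' - r) * (K * (1 - xr) - eta') * M)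
          by (apply Rle_ge, Rmult_le_compat_r; lra).
        assert ((r' - r) * (eta' * M) <= (r' - r) * (eps / 4)) by (apply Rmult_le_compat_l; lra).
        assert (0 <= (r' - r) * eps) by nra.
        nra. }
  assert (HG0 : fmax (F :: nil) t0 <= 0).
  { apply fmax_le; [lra|]. intros f [<-|[]]. unfold F.
    replace (t0 - t0) with 0 by ring. rewrite P3. specialize (HM0 m Hm). lra. }
  assert (HFt : F t <= fmax (F :: nil) t) by (apply fmax_ge; left; auto).
  assert (HFt' : F t <= 0) by lra. unfold F in HFt'.
  assert (0 <= Z * (t - t0)) by nra.
  assert (Z * (t - t0) <= Z * Tstar) by (apply Rmult_le_compat_l; lra).
  lra.
Qed.
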